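(* Let $m_1,m_3,m_4\in\mathbb{R}$ and let $\mathfrak g$ be the real linear span of $E_1=\begin{pmatrix} -2m_1&m_3-im_4&im_1^2&1\\0&0&0&0\\4i&0&2m_1&0\\0&0&0&0\end{pmatrix}$, $E_2=\begin{pmatrix}0&0&0&i\\0&0&0&0\\0&0&0&0\\0&0&0&0\end{pmatrix}$, $E_3=\begin{pmatrix}\frac32 m_3&-m_1&\frac{i}{4}m_1m_3&0\\0&m_3&0&1\\0&2i&2m_3&0\\0&0&0&0\end{pmatrix}$, $E_4=\begin{pmatrix}\frac32 m_4&im_1&\frac{i}{4}m_1m_4&0\\0&m_4&0&i\\0&2&2m_4&0\\0&0&0&0\end{pmatrix}$, $E_5=\begin{pmatrix}0&0&0&0\\0&0&0&0\\0&0&0&1\\0&0&0&0\end{pmatrix}$. Then every integral variety of type $(1/2,0)$ related to $\mathfrak g$ is affinely equivalent to (an open piece of) one of the hypersurfaces 1) $v=2x_1^2+|z_2|^2$; 2) $v=\dfrac{x_1^2}{1-x_2}+2|z_2|^2$.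
   Context: Coordinates in $\mathbb{C}^3$ are $z_1=x_1+iy_1$, $z_2=x_2+iy_2$, $w=u+iv$, $z=(z_1,z_2)$. To a complex $4\times4$ matrix $\begin{pmatrix}a_1&a_2&a_3&p\\ b_1&b_2&b_3&s\\ c_1&c_2&c_3&q\\0&0&0&0\end{pmatrix}$ one associates the holomorphic affine vector field $Z=(a_1z_1+a_2z_2+a_3w+p)\frac{\partial}{\partial z_1}+(b_1z_1+b_2z_2+b_3w+s)\frac{\partial}{\partial z_2}+(c_1z_1+c_2z_2+c_3w+q)\frac{\partial}{\partial w}$. For a real linear span $\mathfrak g$ of such matrices, an integral variety of type $(1/2,0)$ related to $\mathfrak g$ is a real-analytic strictly pseudoconvex real hypersurface $M$ defined near $0\in\mathbb{C}^3$, with $0\in M$, given near $0$ by an equation $v=|z_1|^2+|z_2|^2+\frac12(z_1^2+\bar z_1^2)+\sum_{k+l+2m\ge 3}F_{klm}(z,\bar z)u^m$ (with $F_{klm}$ a polynomial of degree $k$ in $z$ and $l$ in $\bar z$, the right-hand side real), such that for every $Z\in\mathfrak g$ the real vector field $Z+\bar Z$ is tangent to $M$, i.e. $\mathrm{Re}(Z(\Phi))|_M=0$ for a defining function $\Phi$ of $M$. Two hypersurfaces are affinely equivalent if a complex affine transformation of $\mathbb{C}^3$ maps a neighbourhood in one onto an open piece of the other. *)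

(* Defs.v *)
From Stdlib Require Import Reals Lra.
From Coquelicot Require Import Coquelicot.

Open Scope R_scope.

(* Points of C^3 = {(z1, z2, w)}, z1 = x1+i y1, z2 = x2+i y2, w = u+i v. *)
Record C3 := mkC3 { z1c : C ; z2c : C ; wc : C }.

Record R5 := mkR5 { r5x1 : R ; r5y1 : R ; r5x2 : R ; r5y2 : R ; r5u : R }.
Record R6 := mkR6 { r6x1 : R ; r6y1 : R ; r6x2 : R ; r6y2 : R ; r6u : R ; r6v : R }.

Definition C3_of_R6 (p : R6) : C3 :=
  mkC3 (r6x1 p, r6y1 p) (r6x2 p, r6y2 p) (r6u p, r6v p).

(* replace the k-th real coordinate (k = 0..5 in the order x1,y1,x2,y2,u,v) *)
Definition upd6 (p : R6) (k : nat) (t : R) : R6 :=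
  match k with
  | 0%nat => mkR6 t (r6y1 p) (r6x2 p) (r6y2 p) (r6u p) (r6v p)
  | 1%nat => mkR6 (r6x1 p) t (r6x2 p) (r6y2 p) (r6u p) (r6v p)
  | 2%nat => mkR6 (r6x1 p) (r6y1 p) t (r6y2 p) (r6u p) (r6v p)
  | 3%nat => mkR6 (r6x1 p) (r6y1 p) (r6x2 p) t (r6u p) (r6v p)
  | 4%nat => mkR6 (r6x1 p) (r6y1 p) (r6x2 p) (r6y2 p) t (r6v p)
  | _ => mkR6 (r6x1 p) (r6y1 p) (r6x2 p) (r6y2 p) (r6u p) t
  end.

Definition coord6 (p : R6) (k : nat) : R :=
  match k with
  | 0%nat => r6x1 p | 1%nat => r6y1 p | 2%nat => r6x2 p
  | 3%nat => r6y2 p | 4%nat => r6u p | _ => r6v p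
  end.

Definition partial6 (Phi : R6 -> R) (k : nat) (p : R6) : R :=
  Derive (fun t => Phi (upd6 p k t)) (coord6 p k).

(* Wirtinger derivative d/d zeta_j = 1/2 (d/dx_j - i d/dy_j), with
   zeta_0 = z1 (x1,y1), zeta_1 = z2 (x2,y2), zeta_2 = w (u,v). *)
Definition dzeta (Phi : R6 -> R) (j : nat) (p : R6) : C :=
  (RtoC (1/2) * (RtoC (partial6 Phi (2*j) p) - Ci * RtoC (partial6 Phi (2*j+1) p)))%C.

(* Complex 4x4 matrices (entries indexed by 0..3) and the associated
   holomorphic affine vector fields. *)
Definition cmat := nat -> nat -> C.

Definition vf (A : cmat) (zeta : C3) (j : nat) : C :=
  (A j 0%nat * z1c zeta + A j 1%nat * z2c zeta + A j 2%nat * wc zeta + A j 3%nat)%C.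

Definition vf_apply (A : cmat) (Phi : R6 -> R) (p : R6) : C :=
  (vf A (C3_of_R6 p) 0 * dzeta Phi 0 p
   + vf A (C3_of_R6 p) 1 * dzeta Phi 1 p
   + vf A (C3_of_R6 p) 2 * dzeta Phi 2 p)%C.

Definition mat_scale (t : R) (A : cmat) : cmat := fun i j => (RtoC t * A i j)%C.
Definition mat_add (A B : cmat) : cmat := fun i j => (A i j + B i j)%C.

Definition E1 (m1 m3 m4 : R) : cmat := fun i j =>
  match i, j with
  | 0%nat, 0%nat => RtoC (-2 * m1)
  | 0%nat, 1%nat => (RtoC m3 - Ci * RtoC m4)%C
  | 0%nat, 2%nat => (Ci * RtoC (m1 ^ 2))%C
  | 0%nat, 3%nat => RtoC 1
  | 2%nat, 0%nat => (RtoC 4 * Ci)%C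
  | 2%nat, 2%nat => RtoC (2 * m1)
  | _, _ => RtoC 0
  end.

Definition E2 : cmat := fun i j =>
  match i, j with
  | 0%nat, 3%nat => Ci
  | _, _ => RtoC 0
  end.

Definition E3 (m1 m3 : R) : cmat := fun i j =>
  match i, j with
  | 0%nat, 0%nat => RtoC (3 / 2 * m3)
  | 0%nat, 1%nat => RtoC (- m1)
  | 0%nat, 2%nat => (Ci / RtoC 4 * RtoC (m1 * m3))%C
  | 1%nat, 1%nat => RtoC m3
  | 1%nat, 3%nat => RtoC 1
  | 2%nat, 1%nat => (RtoC 2 * Ci)%C
  | 2%nat, 2%nat => RtoC (2 * m3)
  | _, _ => RtoC 0
  end.

Definition E4 (m1 m4 : R) : cmat := fun i j =>
  match i, j with
  | 0%nat, 0%nat => RtoC (3 / 2 * m4)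
  | 0%nat, 1%nat => (Ci * RtoC m1)%C
  | 0%nat, 2%nat => (Ci / RtoC 4 * RtoC (m1 * m4))%C
  | 1%nat, 1%nat => RtoC m4
  | 1%nat, 3%nat => Ci
  | 2%nat, 1%nat => RtoC 2
  | 2%nat, 2%nat => RtoC (2 * m4)
  | _, _ => RtoC 0
  end.

Definition E5 : cmat := fun i j =>
  match i, j with
  | 2%nat, 3%nat => RtoC 1
  | _, _ => RtoC 0
  end.

Definition g_elt (m1 m3 m4 t1 t2 t3 t4 t5 : R) : cmat :=
  mat_add (mat_scale t1 (E1 m1 m3 m4))
  (mat_add (mat_scale t2 E2)
  (mat_add (mat_scale t3 (E3 m1 m3))
  (mat_add (mat_scale t4 (E4 m1 m4)) (mat_scale t5 E5)))).

(* Real power series in the 5 real variables (x1,y1,x2,y2,u). *)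
Definition coeffs := nat -> nat -> nat -> nat -> nat -> R.

Definition monom (a1 a2 a3 a4 a5 : nat) (p : R5) : R :=
  r5x1 p ^ a1 * r5y1 p ^ a2 * r5x2 p ^ a3 * r5y2 p ^ a4 * r5u p ^ a5.

Definition sum_deg (f : nat -> nat -> nat -> nat -> nat -> R) (n : nat) : R :=
  sum_n (fun a1 => sum_n (fun a2 => sum_n (fun a3 => sum_n (fun a4 =>
    if (a1 + a2 + a3 + a4 <=? n)%nat
    then f a1 a2 a3 a4 (n - (a1 + a2 + a3 + a4))%nat else 0) n) n) n) n.

Definition in_polydisc (r : R) (p : R5) : Prop :=
  Rabs (r5x1 p) < r /\ Rabs (r5y1 p) < r /\ Rabs (r5x2 p) < r /\
  Rabs (r5y2 p) < r /\ Rabs (r5u p) < r.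

Definition power_series_on (c : coeffs) (r : R) (F : R5 -> R) : Prop :=
  forall p, in_polydisc r p ->
    ex_series (sum_deg (fun a1 a2 a3 a4 a5 => Rabs (c a1 a2 a3 a4 a5 * monom a1 a2 a3 a4 a5 p))) /\
    is_series (sum_deg (fun a1 a2 a3 a4 a5 => c a1 a2 a3 a4 a5 * monom a1 a2 a3 a4 a5 p)) (F p).

(* Normalization: v = |z1|^2 + |z2|^2 + 1/2 (z1^2 + conj z1^2) + (terms of
   weight k+l+2m >= 3), i.e. v = 2 x1^2 + x2^2 + y2^2 + (weight >= 3), where
   x's and y's have weight 1 and u has weight 2. *)
Definition normal_coeff (a1 a2 a3 a4 a5 : nat) : R :=
  match a1, a2, a3, a4, a5 with
  | 2%nat, 0%nat, 0%nat, 0%nat, 0%nat => 2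
  | 0%nat, 0%nat, 2%nat, 0%nat, 0%nat => 1
  | 0%nat, 0%nat, 0%nat, 2%nat, 0%nat => 1
  | _, _, _, _, _ => 0
  end.

Definition normalized (c : coeffs) : Prop :=
  forall a1 a2 a3 a4 a5, (a1 + a2 + a3 + a4 + 2 * a5 <= 2)%nat ->
    c a1 a2 a3 a4 a5 = normal_coeff a1 a2 a3 a4 a5.

Definition base (p : R6) : R5 := mkR5 (r6x1 p) (r6y1 p) (r6x2 p) (r6y2 p) (r6u p).

Definition defn (F : R5 -> R) : R6 -> R := fun p => F (base p) - r6v p.

Definition graph_pt (F : R5 -> R) (q : R5) : R6 :=
  mkR6 (r5x1 q) (r5y1 q) (r5x2 q) (r5y2 q) (r5u q) (F q).

(* The hypersurface M (a representative of the germ at 0) *)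
Definition hyp (F : R5 -> R) (r : R) : C3 -> Prop :=
  fun zeta => exists q, in_polydisc r q /\ zeta = C3_of_R6 (graph_pt F q).

(* Integral variety of type (1/2,0) related to g = span_R(E1,...,E5):
   M = {v = F(x1,y1,x2,y2,u)} over the polydisc of radius r, with F
   real-analytic (convergent power series) in the normal form above, and
   Re(Z(Phi)) = 0 on M for every Z in g. *)
Definition integral_variety (m1 m3 m4 : R) (F : R5 -> R) (r : R) : Prop :=
  0 < r /\
  (exists c : coeffs, power_series_on c r F /\ normalized c) /\
  (forall t1 t2 t3 t4 t5 : R, forall q : R5, in_polydisc r q ->
     Re (vf_apply (g_elt m1 m3 m4 t1 t2 t3 t4 t5) (defn F) (graph_pt F q)) = 0).

Definition dist3 (a b : C3) : R :=
  Rmax (Cmod (z1c a - z1c b)%C) (Rmax (Cmod (z2c a - z2c b)%C) (Cmod (wc a - wc b)%C)).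

Definition open3 (U : C3 -> Prop) : Prop :=
  forall a, U a -> exists e, 0 < e /\ forall b, dist3 a b < e -> U b.

Definition C3_zero : C3 := mkC3 (RtoC 0) (RtoC 0) (RtoC 0).

Definition complex_affine (T : C3 -> C3) : Prop :=
  (exists (L : nat -> nat -> C) (b : nat -> C), forall zeta,
     T zeta = mkC3
       (L 0 0 * z1c zeta + L 0 1 * z2c zeta + L 0 2 * wc zeta + b 0)%C
       (L 1 0 * z1c zeta + L 1 1 * z2c zeta + L 1 2 * wc zeta + b 1)%C
       (L 2 0 * z1c zeta + L 2 1 * z2c zeta + L 2 2 * wc zeta + b 2)%C)%nat /\
  (exists T' : C3 -> C3, (forall zeta, T' (T zeta) = zeta) /\ (forall zeta, T (T' zeta) = zeta)).

Definition affinely_equiv_germ (M S : C3 -> Prop) : Prop :=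
  exists T W V, complex_affine T /\ open3 W /\ W C3_zero /\ open3 V /\
    forall eta, (exists zeta, M zeta /\ W zeta /\ eta = T zeta) <-> (S eta /\ V eta).

Definition model1 : C3 -> Prop := fun zeta =>
  Im (wc zeta) = 2 * Re (z1c zeta) ^ 2 + Cmod (z2c zeta) ^ 2.

Definition model2 : C3 -> Prop := fun zeta =>
  Re (z2c zeta) <> 1 /\
  Im (wc zeta) = Re (z1c zeta) ^ 2 / (1 - Re (z2c zeta)) + 2 * Cmod (z2c zeta) ^ 2.

(* Main.v *)
Require Import Defs.
From Stdlib Require Import Reals Ranalysis5 Lra Psatz FunctionalExtensionality.
From Coquelicot Require Import Coquelicot.
Open Scope R_scope.

Lemma re_vf_apply A Phi p :
  Re (vf_apply A Phi p) = 1/2 * (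
    Re (vf A (C3_of_R6 p) 0) * partial6 Phi 0 p + Im (vf A (C3_of_R6 p) 0) * partial6 Phi 1 p +
    Re (vf A (C3_of_R6 p) 1) * partial6 Phi 2 p + Im (vf A (C3_of_R6 p) 1) * partial6 Phi 3 p +
    Re (vf A (C3_of_R6 p) 2) * partial6 Phi 4 p + Im (vf A (C3_of_R6 p) 2) * partial6 Phi 5 p).
Proof.
  unfold vf_apply, dzeta. simpl.
  destruct (vf A (C3_of_R6 p) 0) as [a b]; destruct (vf A (C3_of_R6 p) 1) as [c d];
  destruct (vf A (C3_of_R6 p) 2) as [e f].
  unfold Cmult, Cplus, Cminus, Copp, RtoC, Ci, Re, Im; simpl. ring.
Qed.

Section G.
Variables (m1 m3 m4 t1 t2 t3 t4 t5 x1 y1 x2 y2 u v : R).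
Let A := g_elt m1 m3 m4 t1 t2 t3 t4 t5.
Let p := mkR6 x1 y1 x2 y2 u v.
Lemma vf0 : vf A (C3_of_R6 p) 0 =
  (t1*(-2*m1*x1 + m3*x2 + m4*y2 - m1^2*v + 1) + t3*(3/2*m3*x1 - m1*x2 - m1*m3/4*v) + t4*(3/2*m4*x1 - m1*y2 - m1*m4/4*v),
   t1*(-2*m1*y1 + m3*y2 - m4*x2 + m1^2*u) + t2 + t3*(3/2*m3*y1 - m1*y2 + m1*m3/4*u) + t4*(3/2*m4*y1 + m1*x2 + m1*m4/4*u)).
Proof.
  unfold A, p, vf, g_elt, mat_add, mat_scale, E1, E2, E3, E4, E5, C3_of_R6; simpl.
  unfold Cmult, Cplus, Cminus, Copp, Cdiv, Cinv, RtoC, Ci; simpl. f_equal; field.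
Qed.
Lemma vf1 : vf A (C3_of_R6 p) 1 =
  (t3*(m3*x2 + 1) + t4*(m4*x2), t3*(m3*y2) + t4*(m4*y2 + 1)).
Proof.
  unfold A, p, vf, g_elt, mat_add, mat_scale, E1, E2, E3, E4, E5, C3_of_R6; simpl.
  unfold Cmult, Cplus, Cminus, Copp, Cdiv, Cinv, RtoC, Ci; simpl. f_equal; field.
Qed.
Lemma vf2 : vf A (C3_of_R6 p) 2 =
  (t1*(-4*y1 + 2*m1*u) + t3*(-2*y2 + 2*m3*u) + t4*(2*x2 + 2*m4*u) + t5,
   t1*(4*x1 + 2*m1*v) + t3*(2*x2 + 2*m3*v) + t4*(2*y2 + 2*m4*v)).
Proof.
  unfold A, p, vf, g_elt, mat_add, mat_scale, E1, E2, E3, E4, E5, C3_of_R6; simpl.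
  unfold Cmult, Cplus, Cminus, Copp, Cdiv, Cinv, RtoC, Ci; simpl. f_equal; field.
Qed.
End G.

Lemma Series_tail (a : nat -> R) n : ex_series a ->
  Series a - sum_f_R0 a n = Series (fun k => a (S n + k)%nat).
Proof.
  intros H. rewrite (Series_incr_n a (S n)) by (auto with arith || lia). simpl. ring.
Qed.

Lemma sum_f_R0_le_Series (a : nat -> R) n : (forall k, 0 <= a k) -> ex_series a ->
  sum_f_R0 a n <= Series a.
Proof.
  intros Hp He. rewrite <- (Rplus_0_r (sum_f_R0 a n)).
  rewrite (Series_incr_n a (S n)) by (lia || exact He). simpl pred.
  apply Rplus_le_compat_l.
  replace 0 with (Series (fun _ : nat => 0)) at 1.
  2:{ rewrite <- (Series_ext (fun n : nat => 0 * 0)) by (intros; ring).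
      rewrite Series_scal_l. ring. }
  apply Series_le.
  - intros k. split; [lra| apply Hp].
  - apply ex_series_incr_n. exact He.
Qed.

Lemma continuity_sum (f : nat -> R -> R) y N :
  (forall n, continuity_pt (f n) y) -> continuity_pt (fun x => sum_f_R0 (fun n => f n x) N) y.
Proof.
  intros H. induction N as [|N IH]; simpl.
  - apply H.
  - apply continuity_pt_plus; auto.
Qed.

Lemma series_ex_derive (g g' : nat -> R -> R) (B : nat -> R) (c : R) (r0 : posreal) :
  ex_series B ->
  (forall n y, Rabs (y - c) < r0 -> is_derive (g n) y (g' n y)) ->
  (forall n y, Rabs (y - c) < r0 -> continuity_pt (g' n) y) ->
  (forall n y, Rabs (y - c) < r0 -> Rabs (g' n y) <= B n) ->
  (forall y, Rabs (y - c) < r0 -> ex_series (fun n => g n y)) ->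
  ex_derive (fun y => Series (fun n => g n y)) c.
Proof.
  intros HB Hd Hc Hb Hs.
  assert (HG : forall y, Rabs (y - c) < r0 -> ex_series (fun n => g' n y)).
  { intros y Hy. apply (@ex_series_le R_AbsRing R_CompleteNormedModule _ B); [|exact HB]. intros n. apply Hb; auto. }
  assert (HGa : forall y, Rabs (y - c) < r0 -> ex_series (fun n => Rabs (g' n y))).
  { intros y Hy. apply (@ex_series_le R_AbsRing R_CompleteNormedModule _ B); [|exact HB]. intros n. change (Rabs (Rabs (g' n y)) <= B n). rewrite Rabs_Rabsolu. apply Hb; auto. }
  assert (CVU1 : CVU (fun N y => sum_f_R0 (fun n => g' n y) N) (fun y => Series (fun n => g' n y)) c r0).
  { intros eps Heps.
    assert (Hl := Series_correct _ HB). apply is_series_Reals in Hl.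
    destruct (Hl eps Heps) as [N HN]. exists N. intros n y Hn Hy. unfold Boule in Hy.
    rewrite Series_tail by auto.
    eapply Rle_lt_trans. apply Series_Rabs.
    { apply ex_series_incr_n with (n := S n) (a := fun k => Rabs (g' k y)). auto. }
    eapply Rle_lt_trans with (Series (fun k => B (S n + k)%nat)).
    { apply Series_le. intros k. split. apply Rabs_pos. apply Hb; auto.
      apply ex_series_incr_n. auto. }
    rewrite <- Series_tail by auto.
    specialize (HN n Hn). unfold R_dist in HN.
    assert (sum_f_R0 B n <= Series B).
    { apply sum_f_R0_le_Series; auto. intros k. eapply Rle_trans. apply Rabs_pos. apply (Hb k c). rewrite Rminus_eq_0, Rabs_R0. apply cond_pos. }
    rewrite Rabs_minus_sym in HN. rewrite Rabs_right in HN; lra. }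
  exists (Series (fun n => g' n c)).
  apply is_derive_Reals.
  apply (derivable_pt_lim_CVU (fun N y => sum_f_R0 (fun n => g n y) N)
           (fun N y => sum_f_R0 (fun n => g' n y) N) _ (fun y => Series (fun n => g' n y)) c c r0).
  - unfold Boule. rewrite Rminus_eq_0, Rabs_R0. apply cond_pos.
  - intros y N Hy. unfold Boule in Hy. apply is_derive_Reals.
    eapply is_derive_ext. { intros t. apply sum_n_Reals. }
    rewrite <- sum_n_Reals. apply (@is_derive_sum_n R_AbsRing R_NormedModule (fun n t => g n t) N y (fun n => g' n y)). intros k _. apply Hd. auto.
  - intros y Hy. unfold Boule in Hy. apply is_series_Reals. apply Series_correct. auto.
  - exact CVU1.
  - intros y Hy. eapply (CVU_continuity _ _ c r0 CVU1); auto.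
    intros n z Hz. apply continuity_sum. intros k. apply Hc. auto.
Qed.

Lemma sum_n_le_R (f g : nat -> R) n : (forall k, (k <= n)%nat -> f k <= g k) -> sum_n f n <= sum_n g n.
Proof.
  induction n as [|n IH]; intros H.
  - rewrite !sum_O. apply H; lia.
  - rewrite !sum_Sn. change (sum_n f n + f (S n) <= sum_n g n + g (S n)).
    apply Rplus_le_compat; [apply IH; intros; apply H; lia | apply H; lia].
Qed.

Lemma sum_n_abs (f : nat -> R) n : Rabs (sum_n f n) <= sum_n (fun k => Rabs (f k)) n.
Proof.
  induction n as [|n IH].
  - rewrite !sum_O. lra.
  - rewrite !sum_Sn. change (Rabs (sum_n f n + f (S n)) <= sum_n (fun k => Rabs (f k)) n + Rabs (f (S n))).
    eapply Rle_trans. apply Rabs_triang. lra.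
Qed.

Lemma sum_n_scal_R (K : R) (f : nat -> R) n : sum_n (fun k => K * f k) n = K * sum_n f n.
Proof. apply (@sum_n_mult_l R_Ring). Qed.

Definition f5 := nat -> nat -> nat -> nat -> nat -> R.

Lemma sum_deg_ext (f g : f5) n : (forall a1 a2 a3 a4 a5, f a1 a2 a3 a4 a5 = g a1 a2 a3 a4 a5) ->
  sum_deg f n = sum_deg g n.
Proof.
  intros H. assert (f = g) by (repeat (apply functional_extensionality; intro); apply H). subst; reflexivity.
Qed.

Lemma sum_deg_le (f g : f5) n :
  (forall a1 a2 a3 a4, (a1 + a2 + a3 + a4 <= n)%nat ->
     f a1 a2 a3 a4 (n - (a1 + a2 + a3 + a4))%nat <= g a1 a2 a3 a4 (n - (a1 + a2 + a3 + a4))%nat) ->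
  sum_deg f n <= sum_deg g n.
Proof.
  intros H. unfold sum_deg.
  apply sum_n_le_R; intros a1 _. apply sum_n_le_R; intros a2 _.
  apply sum_n_le_R; intros a3 _. apply sum_n_le_R; intros a4 _.
  destruct (Nat.leb_spec (a1 + a2 + a3 + a4) n). apply H; auto. lra.
Qed.

Lemma sum_deg_abs (f : f5) n : Rabs (sum_deg f n) <= sum_deg (fun a1 a2 a3 a4 a5 => Rabs (f a1 a2 a3 a4 a5)) n.
Proof.
  unfold sum_deg.
  eapply Rle_trans. apply sum_n_abs. apply sum_n_le_R; intros a1 _.
  eapply Rle_trans. apply sum_n_abs. apply sum_n_le_R; intros a2 _.
  eapply Rle_trans. apply sum_n_abs. apply sum_n_le_R; intros a3 _.
  eapply Rle_trans. apply sum_n_abs. apply sum_n_le_R; intros a4 _.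
  destruct (a1 + a2 + a3 + a4 <=? n)%nat. lra. rewrite Rabs_R0. lra.
Qed.

Lemma sum_deg_scal (K : R) (f : f5) n :
  sum_deg (fun a1 a2 a3 a4 a5 => K * f a1 a2 a3 a4 a5) n = K * sum_deg f n.
Proof.
  unfold sum_deg. rewrite <- sum_n_scal_R. apply sum_n_ext; intros a1.
  rewrite <- sum_n_scal_R. apply sum_n_ext; intros a2.
  rewrite <- sum_n_scal_R. apply sum_n_ext; intros a3.
  rewrite <- sum_n_scal_R. apply sum_n_ext; intros a4.
  destruct (a1 + a2 + a3 + a4 <=? n)%nat; [reflexivity | symmetry; apply Rmult_0_r].
Qed.

Lemma sum_deg_zero n : sum_deg (fun _ _ _ _ _ => 0) n = 0.
Proof.
  rewrite (sum_deg_ext _ (fun _ _ _ _ _ => 0 * 0)) by (intros; ring).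
  rewrite sum_deg_scal. ring.
Qed.

Lemma sum_deg_nonneg (f : f5) n : (forall a1 a2 a3 a4 a5, 0 <= f a1 a2 a3 a4 a5) -> 0 <= sum_deg f n.
Proof.
  intros H. rewrite <- (sum_deg_zero n). apply sum_deg_le. intros; apply H.
Qed.

Lemma is_derive_sum_n_R (f : nat -> R -> R) (d : nat -> R) n t :
  (forall k, is_derive (f k) t (d k)) -> is_derive (fun y => sum_n (fun k => f k y) n) t (sum_n d n).
Proof.
  intros H. apply (@is_derive_sum_n R_AbsRing R_NormedModule f n t d). intros; apply H.
Qed.

Lemma is_derive_sum_deg (e : f5) (j : nat -> nat -> nat -> nat -> nat -> nat) n t :
  is_derive (fun y => sum_deg (fun a1 a2 a3 a4 a5 => e a1 a2 a3 a4 a5 * y ^ j a1 a2 a3 a4 a5) n) t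
    (sum_deg (fun a1 a2 a3 a4 a5 => e a1 a2 a3 a4 a5 * (INR (j a1 a2 a3 a4 a5) * t ^ pred (j a1 a2 a3 a4 a5))) n).
Proof.
  unfold sum_deg.
  apply is_derive_sum_n_R; intros a1.
  apply is_derive_sum_n_R; intros a2.
  apply is_derive_sum_n_R; intros a3.
  apply is_derive_sum_n_R; intros a4.
  destruct (a1 + a2 + a3 + a4 <=? n)%nat.
  - apply is_derive_scal. replace (INR _ * t ^ _) with (INR (j a1 a2 a3 a4 (n - (a1 + a2 + a3 + a4))%nat) * 1 * t ^ pred (j a1 a2 a3 a4 (n - (a1 + a2 + a3 + a4))%nat)) by ring.
    apply (is_derive_pow (fun y => y)). apply (@is_derive_id R_AbsRing).
  - apply (@is_derive_const R_AbsRing R_NormedModule).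
Qed.

Definition upd5 (q : R5) (k : nat) (t : R) : R5 :=
  match k with
  | 0%nat => mkR5 t (r5y1 q) (r5x2 q) (r5y2 q) (r5u q)
  | 1%nat => mkR5 (r5x1 q) t (r5x2 q) (r5y2 q) (r5u q)
  | 2%nat => mkR5 (r5x1 q) (r5y1 q) t (r5y2 q) (r5u q)
  | 3%nat => mkR5 (r5x1 q) (r5y1 q) (r5x2 q) t (r5u q)
  | _ => mkR5 (r5x1 q) (r5y1 q) (r5x2 q) (r5y2 q) t
  end.

Definition coord5 (q : R5) (k : nat) : R :=
  match k with
  | 0%nat => r5x1 q | 1%nat => r5y1 q | 2%nat => r5x2 q | 3%nat => r5y2 q | _ => r5u q
  end.

Definition ex5 (a1 a2 a3 a4 a5 k : nat) : nat :=
  match k with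
  | 0%nat => a1 | 1%nat => a2 | 2%nat => a3 | 3%nat => a4 | _ => a5
  end.

Lemma monom_upd5 a1 a2 a3 a4 a5 q k t :
  monom a1 a2 a3 a4 a5 (upd5 q k t) = monom a1 a2 a3 a4 a5 (upd5 q k 1) * t ^ ex5 a1 a2 a3 a4 a5 k.
Proof.
  destruct k as [|[|[|[|k]]]]; unfold monom; simpl; rewrite pow1; ring.
Qed.

Lemma prod4_bound z1 z2 z3 z4 b1 b2 b3 b4 s :
  Rabs z1 <= s -> Rabs z2 <= s -> Rabs z3 <= s -> Rabs z4 <= s ->
  Rabs (z1 ^ b1 * z2 ^ b2 * z3 ^ b3 * z4 ^ b4) <= s ^ (b1 + b2 + b3 + b4).
Proof.
  intros H1 H2 H3 H4. rewrite !Rabs_mult, <- !RPow_abs, !pow_add.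
  assert (forall z b, Rabs z <= s -> 0 <= Rabs z ^ b <= s ^ b).
  { intros z b Hz. split. apply pow_le, Rabs_pos. apply pow_incr. split; auto. apply Rabs_pos. }
  destruct (H z1 b1 H1), (H z2 b2 H2), (H z3 b3 H3), (H z4 b4 H4).
  repeat apply Rmult_le_compat; auto; repeat apply Rmult_le_pos; auto.
Qed.

Lemma key_bound j m y s : Rabs y <= s ->
  INR j * Rabs y ^ pred j * s ^ m <= INR (j + m) * s ^ pred (j + m).
Proof.
  intros Hy. assert (Hs : 0 <= s) by (eapply Rle_trans; [apply Rabs_pos|exact Hy]).
  destruct j as [|b].
  - simpl. rewrite Rmult_0_l, Rmult_0_l. apply Rmult_le_pos. apply pos_INR. apply pow_le; auto.
  - simpl pred. replace (pred (S b + m)) with (b + m)%nat by (simpl; lia).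
    rewrite pow_add, <- Rmult_assoc.
    apply Rmult_le_compat_r. apply pow_le; auto.
    apply Rmult_le_compat. apply pos_INR. apply pow_le, Rabs_pos.
    apply le_INR; lia. apply pow_incr. split; auto. apply Rabs_pos.
Qed.

Lemma dmonom_bound a1 a2 a3 a4 a5 q k y s :
  Rabs (r5x1 q) <= s -> Rabs (r5y1 q) <= s -> Rabs (r5x2 q) <= s -> Rabs (r5y2 q) <= s ->
  Rabs (r5u q) <= s -> Rabs y <= s ->
  Rabs (monom a1 a2 a3 a4 a5 (upd5 q k 1)) * (INR (ex5 a1 a2 a3 a4 a5 k) * Rabs y ^ pred (ex5 a1 a2 a3 a4 a5 k))
  <= INR (a1 + a2 + a3 + a4 + a5) * s ^ pred (a1 + a2 + a3 + a4 + a5).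
Proof.
  intros H1 H2 H3 H4 H5 Hy.
  assert (Hs : 0 <= s) by (eapply Rle_trans; [apply Rabs_pos|exact Hy]).
  assert (G : forall P j m, Rabs P <= s ^ m -> Rabs P * (INR j * Rabs y ^ pred j) <= INR (j + m) * s ^ pred (j + m)).
  { intros P j m HP. eapply Rle_trans. 2: apply (key_bound j m y s Hy).
    rewrite Rmult_comm. apply Rmult_le_compat_l. apply Rmult_le_pos. apply pos_INR. apply pow_le, Rabs_pos. exact HP. }
  destruct k as [|[|[|[|k]]]]; unfold monom; simpl; rewrite pow1.
  - replace (a1 + a2 + a3 + a4 + a5)%nat with (a1 + (a2 + a3 + a4 + a5))%nat by lia.
    apply G. replace (1 * r5y1 q ^ a2 * r5x2 q ^ a3 * r5y2 q ^ a4 * r5u q ^ a5) with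
      (r5y1 q ^ a2 * r5x2 q ^ a3 * r5y2 q ^ a4 * r5u q ^ a5) by ring. apply prod4_bound; auto.
  - replace (a1 + a2 + a3 + a4 + a5)%nat with (a2 + (a1 + a3 + a4 + a5))%nat by lia.
    apply G. replace (r5x1 q ^ a1 * 1 * r5x2 q ^ a3 * r5y2 q ^ a4 * r5u q ^ a5) with
      (r5x1 q ^ a1 * r5x2 q ^ a3 * r5y2 q ^ a4 * r5u q ^ a5) by ring. apply prod4_bound; auto.
  - replace (a1 + a2 + a3 + a4 + a5)%nat with (a3 + (a1 + a2 + a4 + a5))%nat by lia.
    apply G. replace (r5x1 q ^ a1 * r5y1 q ^ a2 * 1 * r5y2 q ^ a4 * r5u q ^ a5) with
      (r5x1 q ^ a1 * r5y1 q ^ a2 * r5y2 q ^ a4 * r5u q ^ a5) by ring. apply prod4_bound; auto.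
  - replace (a1 + a2 + a3 + a4 + a5)%nat with (a4 + (a1 + a2 + a3 + a5))%nat by lia.
    apply G. replace (r5x1 q ^ a1 * r5y1 q ^ a2 * r5x2 q ^ a3 * 1 * r5u q ^ a5) with
      (r5x1 q ^ a1 * r5y1 q ^ a2 * r5x2 q ^ a3 * r5u q ^ a5) by ring. apply prod4_bound; auto.
  - replace (a1 + a2 + a3 + a4 + a5)%nat with (a5 + (a1 + a2 + a3 + a4))%nat by lia.
    apply G. replace (r5x1 q ^ a1 * r5y1 q ^ a2 * r5x2 q ^ a3 * r5y2 q ^ a4 * 1) with
      (r5x1 q ^ a1 * r5y1 q ^ a2 * r5x2 q ^ a3 * r5y2 q ^ a4) by ring. apply prod4_bound; auto.
Qed.

Lemma monom_bound a1 a2 a3 a4 a5 q s :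
  Rabs (r5x1 q) <= s -> Rabs (r5y1 q) <= s -> Rabs (r5x2 q) <= s -> Rabs (r5y2 q) <= s ->
  Rabs (r5u q) <= s -> Rabs (monom a1 a2 a3 a4 a5 q) <= s ^ (a1 + a2 + a3 + a4 + a5).
Proof.
  intros H1 H2 H3 H4 H5. unfold monom.
  rewrite Rabs_mult, pow_add. apply Rmult_le_compat. apply Rabs_pos. apply Rabs_pos.
  apply prod4_bound; auto. rewrite <- RPow_abs. apply pow_incr. split; auto. apply Rabs_pos.
Qed.

Definition cst5 (s : R) : R5 := mkR5 s s s s s.

Lemma monom_cst a1 a2 a3 a4 a5 s : monom a1 a2 a3 a4 a5 (cst5 s) = s ^ (a1 + a2 + a3 + a4 + a5).
Proof. unfold monom, cst5; simpl. rewrite !pow_add. ring. Qed.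

Lemma bernoulli_like n a b : 0 <= a <= b -> INR n * a ^ pred n * (b - a) <= b ^ n.
Proof.
  intros [Ha Hab].
  assert (Q : forall m, a ^ S m + INR (S m) * a ^ m * (b - a) <= b ^ S m).
  { induction m as [|m IH].
    - simpl. lra.
    - assert (HA : 0 <= a ^ m) by (apply pow_le; auto).
      assert (Hn : 0 <= INR (S m)) by apply pos_INR.
      assert (HP : 0 <= INR (S m) * a ^ m * ((b - a) * (b - a))).
      { apply Rmult_le_pos. apply Rmult_le_pos; auto. apply Rle_0_sqr. }
      assert (E : b ^ S (S m) - (a ^ S (S m) + INR (S (S m)) * a ^ S m * (b - a))
                  = b * (b ^ S m - (a ^ S m + INR (S m) * a ^ m * (b - a))) + INR (S m) * a ^ m * ((b - a) * (b - a))).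
      { rewrite (S_INR (S m)). simpl. ring. }
      assert (0 <= b * (b ^ S m - (a ^ S m + INR (S m) * a ^ m * (b - a)))).
      { apply Rmult_le_pos; lra. }
      lra. }
  destruct n as [|m].
  - simpl. lra.
  - specialize (Q m). simpl pred. assert (0 <= a ^ S m) by (apply pow_le; auto). lra.
Qed.

Lemma upd5_polydisc q k y s r :
  Rabs (r5x1 q) <= s -> Rabs (r5y1 q) <= s -> Rabs (r5x2 q) <= s -> Rabs (r5y2 q) <= s ->
  Rabs (r5u q) <= s -> Rabs y <= s -> s < r -> in_polydisc r (upd5 q k y).
Proof.
  intros; destruct k as [|[|[|[|k]]]]; unfold in_polydisc; simpl; repeat split; lra.
Qed.

Lemma coord5_bound q k s :
  Rabs (r5x1 q) <= s -> Rabs (r5y1 q) <= s -> Rabs (r5x2 q) <= s -> Rabs (r5y2 q) <= s ->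
  Rabs (r5u q) <= s -> Rabs (coord5 q k) <= s.
Proof. intros; destruct k as [|[|[|[|k]]]]; simpl; auto. Qed.

Definition Aser (c : coeffs) (rho : R) (n : nat) : R :=
  sum_deg (fun a1 a2 a3 a4 a5 => Rabs (c a1 a2 a3 a4 a5 * monom a1 a2 a3 a4 a5 (cst5 rho))) n.

Lemma Aser_ex c r F rho : power_series_on c r F -> 0 <= rho < r -> ex_series (Aser c rho).
Proof.
  intros HF Hr. destruct (HF (cst5 rho)) as [H _].
  unfold in_polydisc, cst5; simpl. rewrite Rabs_right by lra. repeat split; lra.
  exact H.
Qed.

Lemma F_line_ex_derive (c : coeffs) (r : R) (F : R5 -> R) q k :
  power_series_on c r F -> in_polydisc r q -> ex_derive (fun t => F (upd5 q k t)) (coord5 q k).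
Proof.
  intros HF Hq.
  destruct Hq as (H1 & H2 & H3 & H4 & H5).
  set (s := Rmax (Rabs (r5x1 q)) (Rmax (Rabs (r5y1 q)) (Rmax (Rabs (r5x2 q)) (Rmax (Rabs (r5y2 q)) (Rabs (r5u q)))))).
  assert (Hsr : s < r) by (unfold s; repeat apply Rmax_lub_lt; auto).
  assert (B1 : Rabs (r5x1 q) <= s) by (unfold s; apply Rmax_l).
  assert (B2 : Rabs (r5y1 q) <= s) by (unfold s; eapply Rle_trans; [|apply Rmax_r]; apply Rmax_l).
  assert (B3 : Rabs (r5x2 q) <= s) by (unfold s; eapply Rle_trans; [|apply Rmax_r]; eapply Rle_trans; [|apply Rmax_r]; apply Rmax_l).
  assert (B4 : Rabs (r5y2 q) <= s) by (unfold s; eapply Rle_trans; [|apply Rmax_r]; eapply Rle_trans; [|apply Rmax_r]; eapply Rle_trans; [|apply Rmax_r]; apply Rmax_l).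
  assert (B5 : Rabs (r5u q) <= s) by (unfold s; eapply Rle_trans; [|apply Rmax_r]; eapply Rle_trans; [|apply Rmax_r]; eapply Rle_trans; [|apply Rmax_r]; apply Rmax_r).
  assert (Hs0 : 0 <= s) by (eapply Rle_trans; [apply Rabs_pos|exact B1]).
  set (s1 := (2 * s + r) / 3). set (rho := (s + 2 * r) / 3).
  assert (Hr0 : 0 < s1 - s) by (unfold s1; lra).
  set (r0 := mkposreal _ Hr0).
  assert (Hy : forall y, Rabs (y - coord5 q k) < r0 -> Rabs y <= s1).
  { intros y Hy. simpl in Hy. pose proof (coord5_bound q k s B1 B2 B3 B4 B5).
    pose proof (Rabs_triang (y - coord5 q k) (coord5 q k)). replace (y - coord5 q k + coord5 q k) with y in H0 by ring. lra. }
  assert (Cs1 : forall z, Rabs z <= s -> Rabs z <= s1) by (intros; unfold s1 in *; lra).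
  assert (Hpd : forall y, Rabs (y - coord5 q k) < r0 -> in_polydisc r (upd5 q k y)).
  { intros y Hy'. apply (upd5_polydisc q k y s1 r); auto. unfold s1; lra. }
  set (e := fun a1 a2 a3 a4 a5 => c a1 a2 a3 a4 a5 * monom a1 a2 a3 a4 a5 (upd5 q k 1)).
  set (j := fun a1 a2 a3 a4 a5 => ex5 a1 a2 a3 a4 a5 k).
  set (g := fun n y => sum_deg (fun a1 a2 a3 a4 a5 => e a1 a2 a3 a4 a5 * y ^ j a1 a2 a3 a4 a5) n).
  set (g' := fun n y => sum_deg (fun a1 a2 a3 a4 a5 => e a1 a2 a3 a4 a5 * (INR (j a1 a2 a3 a4 a5) * y ^ pred (j a1 a2 a3 a4 a5))) n).
  assert (Hgs : forall y, Rabs (y - coord5 q k) < r0 -> is_series (fun n => g n y) (F (upd5 q k y))).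
  { intros y Hy'. destruct (HF _ (Hpd y Hy')) as [_ Hser].
    eapply is_series_ext. 2: exact Hser. intros n. unfold g. apply sum_deg_ext. intros.
    unfold e, j. rewrite monom_upd5. ring. }
  assert (HA := Aser_ex c r F rho HF ltac:(unfold rho; lra)).
  apply (ex_derive_ext_loc (fun y => Series (fun n => g n y))).
  { exists r0. intros t Ht. apply is_series_unique. apply Hgs. exact Ht. }
  apply (series_ex_derive g g' (fun n => Aser c rho n * / (rho - s1)) (coord5 q k) r0).
  - apply ex_series_scal_r. exact HA.
  - intros n y _. apply is_derive_sum_deg.
  - intros n y _. apply continuity_pt_filterlim.
    apply (@ex_derive_continuous R_AbsRing R_NormedModule).
    exists (sum_deg (fun a1 a2 a3 a4 a5 => (e a1 a2 a3 a4 a5 * INR (j a1 a2 a3 a4 a5)) * (INR (pred (j a1 a2 a3 a4 a5)) * y ^ pred (pred (j a1 a2 a3 a4 a5)))) n).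
    eapply is_derive_ext. 2: apply is_derive_sum_deg.
    intros t. unfold g'. apply sum_deg_ext. intros. simpl. ring.
  - intros n y Hy'. specialize (Hy y Hy').
    unfold g'. eapply Rle_trans. apply sum_deg_abs.
    unfold Aser. rewrite Rmult_comm, <- sum_deg_scal.
    apply sum_deg_le. intros a1 a2 a3 a4 Ha.
    set (a5 := (n - (a1 + a2 + a3 + a4))%nat).
    assert (Htot : (a1 + a2 + a3 + a4 + a5)%nat = n) by (unfold a5; lia).
    unfold e, j. rewrite !Rabs_mult, monom_cst, Htot.
    rewrite (Rabs_right (rho ^ n)) by (apply Rle_ge, pow_le; unfold rho; lra).
    rewrite (Rabs_right (INR _)) by (apply Rle_ge, pos_INR).
    rewrite <- RPow_abs.
    pose proof (dmonom_bound a1 a2 a3 a4 a5 q k y s1 (Cs1 _ B1) (Cs1 _ B2) (Cs1 _ B3) (Cs1 _ B4) (Cs1 _ B5) Hy) as Hd.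
    rewrite Htot in Hd.
    pose proof (bernoulli_like n s1 rho ltac:(unfold s1, rho; lra)) as Hb.
    assert (Hrs : 0 < rho - s1) by (unfold rho, s1; lra).
    assert (INR n * s1 ^ pred n <= rho ^ n * / (rho - s1)).
    { apply (Rmult_le_reg_r (rho - s1)); auto. replace (rho ^ n * / (rho - s1) * (rho - s1)) with (rho ^ n) by (field; lra). lra. }
    assert (0 <= Rabs (c a1 a2 a3 a4 a5)) by apply Rabs_pos.
    replace (/ (rho - s1) * (Rabs (c a1 a2 a3 a4 a5) * rho ^ n)) with (Rabs (c a1 a2 a3 a4 a5) * (rho ^ n * / (rho - s1))) by ring.
    rewrite !Rmult_assoc. apply Rmult_le_compat_l; auto. lra.
  - intros y Hy'. eexists. apply Hgs. exact Hy'.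
Qed.

Lemma normal_coeff_small a1 a2 a3 a4 a5 : (a1 + a2 + a3 + a4 + a5 <= 1)%nat -> normal_coeff a1 a2 a3 a4 a5 = 0.
Proof.
  intros H. destruct a1 as [|[|a1]], a2 as [|[|a2]], a3 as [|[|a3]], a4 as [|[|a4]], a5 as [|[|a5]];
    simpl; try reflexivity; lia.
Qed.

Lemma F_small (c : coeffs) (r : R) (F : R5 -> R) rho s q :
  power_series_on c r F -> normalized c -> 0 < rho < r -> 0 <= s <= rho ->
  Rabs (r5x1 q) <= s -> Rabs (r5y1 q) <= s -> Rabs (r5x2 q) <= s -> Rabs (r5y2 q) <= s ->
  Rabs (r5u q) <= s -> Rabs (F q) <= (s / rho) ^ 2 * Series (Aser c rho).
Proof.
  intros HF Hn Hr Hs B1 B2 B3 B4 B5.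
  assert (Hq : in_polydisc r q) by (unfold in_polydisc; repeat split; lra).
  destruct (HF q Hq) as [_ Hser].
  assert (HA := Aser_ex c r F rho HF ltac:(lra)).
  set (S := fun n => sum_deg (fun a1 a2 a3 a4 a5 => c a1 a2 a3 a4 a5 * monom a1 a2 a3 a4 a5 q) n).
  assert (Hb : forall n, Rabs (S n) <= (s / rho) ^ 2 * Aser c rho n).
  { intros n. unfold S. eapply Rle_trans. apply sum_deg_abs.
    unfold Aser. rewrite <- sum_deg_scal. apply sum_deg_le. intros a1 a2 a3 a4 Ha.
    set (a5 := (n - (a1 + a2 + a3 + a4))%nat).
    assert (Htot : (a1 + a2 + a3 + a4 + a5)%nat = n) by (unfold a5; lia).
    rewrite !Rabs_mult, monom_cst, Htot.
    rewrite (Rabs_right (rho ^ n)) by (apply Rle_ge, pow_le; lra).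
    destruct (Nat.le_gt_cases n 1) as [Hn1|Hn1].
    - rewrite Hn by lia. rewrite normal_coeff_small by lia. rewrite Rabs_R0. 
      assert (0 <= (s/rho)^2) by (apply pow_le; apply Rdiv_le_0_compat; lra).
      assert (0 <= rho ^ n) by (apply pow_le; lra). nra.
    - pose proof (monom_bound a1 a2 a3 a4 a5 q s B1 B2 B3 B4 B5) as Hm. rewrite Htot in Hm.
      replace n with (2 + (n - 2))%nat in Hm |- * by lia.
      rewrite pow_add in Hm |- *.
      assert (s ^ (n - 2) <= rho ^ (n - 2)) by (apply pow_incr; lra).
      assert (0 <= s ^ (n-2)) by (apply pow_le; lra).
      assert (E : (s / rho) ^ 2 * (rho ^ 2 * rho ^ (n - 2)) = s ^ 2 * rho ^ (n - 2)) by (field; lra).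
      assert (0 <= Rabs (c a1 a2 a3 a4 a5)) by apply Rabs_pos.
      replace ((s / rho) ^ 2 * (Rabs (c a1 a2 a3 a4 a5) * (rho ^ 2 * rho ^ (n - 2))))
        with (Rabs (c a1 a2 a3 a4 a5) * ((s / rho) ^ 2 * (rho ^ 2 * rho ^ (n - 2)))) by ring.
      rewrite E. apply Rmult_le_compat_l; auto.
      eapply Rle_trans. exact Hm. apply Rmult_le_compat_l. apply pow_le; lra. auto. }
  assert (Hex : ex_series (fun n => Rabs (S n))).
  { apply (@ex_series_le R_AbsRing R_CompleteNormedModule _ (fun n => (s / rho) ^ 2 * Aser c rho n)).
    intros n. change (Rabs (Rabs (S n)) <= (s / rho) ^ 2 * Aser c rho n). rewrite Rabs_Rabsolu. apply Hb.
    apply (ex_series_ext (fun n => Aser c rho n * (s / rho) ^ 2)); [intros; apply Rmult_comm | apply ex_series_scal_r; exact HA]. }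
  rewrite <- (is_series_unique _ _ Hser). fold S.
  eapply Rle_trans. apply Series_Rabs. exact Hex.
  rewrite <- Series_scal_l. apply Series_le.
  intros n. split. apply Rabs_pos. apply Hb.
  apply (ex_series_ext (fun n => Aser c rho n * (s / rho) ^ 2)); [intros; apply Rmult_comm | apply ex_series_scal_r; exact HA].
Qed.

Lemma partial_k (F : R5 -> R) q k : (k < 5)%nat -> ex_derive (fun t => F (upd5 q k t)) (coord5 q k) ->
  partial6 (defn F) k (graph_pt F q) = Derive (fun t => F (upd5 q k t)) (coord5 q k).
Proof.
  intros Hk Hd. destruct q as [x1 y1 x2 y2 u].
  destruct k as [|[|[|[|[|k]]]]]; try lia; unfold partial6, defn, base, upd6, graph_pt, coord6; simpl in *;
  (rewrite Derive_minus; [rewrite Derive_const; ring | exact Hd | apply ex_derive_const]).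
Qed.

Lemma partial_5 (F : R5 -> R) q : partial6 (defn F) 5 (graph_pt F q) = -1.
Proof.
  destruct q as [x1 y1 x2 y2 u]. unfold partial6, defn, base, upd6, graph_pt, coord6; simpl.
  apply is_derive_unique. auto_derive; auto.
Qed.

Section Conds.
Variables (m1 m3 m4 : R) (F : R5 -> R) (x1 y1 x2 y2 u : R).
Let q := mkR5 x1 y1 x2 y2 u.
Let v := F q.
Hypothesis H3 : forall t1 t2 t3 t4 t5 : R,
  Re (vf_apply (g_elt m1 m3 m4 t1 t2 t3 t4 t5) (defn F) (graph_pt F q)) = 0.
Hypothesis HD : forall k, ex_derive (fun t => F (upd5 q k t)) (coord5 q k).
Let D k := Derive (fun t => F (upd5 q k t)) (coord5 q k).

Lemma cond_gen t1 t2 t3 t4 t5 :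
  (t1*(-2*m1*x1 + m3*x2 + m4*y2 - m1^2*v + 1) + t3*(3/2*m3*x1 - m1*x2 - m1*m3/4*v) + t4*(3/2*m4*x1 - m1*y2 - m1*m4/4*v)) * D 0
  + (t1*(-2*m1*y1 + m3*y2 - m4*x2 + m1^2*u) + t2 + t3*(3/2*m3*y1 - m1*y2 + m1*m3/4*u) + t4*(3/2*m4*y1 + m1*x2 + m1*m4/4*u)) * D 1
  + (t3*(m3*x2 + 1) + t4*(m4*x2)) * D 2 + (t3*(m3*y2) + t4*(m4*y2 + 1)) * D 3
  + (t1*(-4*y1 + 2*m1*u) + t3*(-2*y2 + 2*m3*u) + t4*(2*x2 + 2*m4*u) + t5) * D 4
  - (t1*(4*x1 + 2*m1*v) + t3*(2*x2 + 2*m3*v) + t4*(2*y2 + 2*m4*v)) = 0.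
Proof.
  pose proof (H3 t1 t2 t3 t4 t5) as H.
  rewrite re_vf_apply in H.
  rewrite (partial_k F q 0) in H by (auto; lia).
  rewrite (partial_k F q 1) in H by (auto; lia).
  rewrite (partial_k F q 2) in H by (auto; lia).
  rewrite (partial_k F q 3) in H by (auto; lia).
  rewrite (partial_k F q 4) in H by (auto; lia).
  rewrite partial_5 in H.
  change (graph_pt F q) with (mkR6 x1 y1 x2 y2 u v) in H.
  rewrite vf0, vf1, vf2 in H. unfold Re, Im in H. simpl fst in H. simpl snd in H.
  fold (D 0) (D 1) (D 2) (D 3) (D 4) in H.
  clearbody D v. lra.
Qed.
End Conds.

Definition DF (F : R5 -> R) q k := Derive (fun t => F (upd5 q k t)) (coord5 q k).

Lemma conds m1 m3 m4 F x1 y1 x2 y2 u :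
  (forall t1 t2 t3 t4 t5 : R,
    Re (vf_apply (g_elt m1 m3 m4 t1 t2 t3 t4 t5) (defn F) (graph_pt F (mkR5 x1 y1 x2 y2 u))) = 0) ->
  (forall k, ex_derive (fun t => F (upd5 (mkR5 x1 y1 x2 y2 u) k t)) (coord5 (mkR5 x1 y1 x2 y2 u) k)) ->
  let q := mkR5 x1 y1 x2 y2 u in let v := F q in
  DF F q 1 = 0 /\ DF F q 4 = 0 /\
  (1 + m3*x2 + m4*y2 - 2*m1*x1 - m1^2*v) * DF F q 0 - (4*x1 + 2*m1*v) = 0 /\
  (3/2*m3*x1 - m1*x2 - m1*m3/4*v) * DF F q 0 + (m3*x2 + 1) * DF F q 2 + (m3*y2) * DF F q 3 - (2*x2 + 2*m3*v) = 0 /\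
  (3/2*m4*x1 - m1*y2 - m1*m4/4*v) * DF F q 0 + (m4*x2) * DF F q 2 + (m4*y2+1) * DF F q 3 - (2*y2 + 2*m4*v) = 0.
Proof.
  intros H3 HD q v.
  pose proof (cond_gen m1 m3 m4 F x1 y1 x2 y2 u H3 HD) as C.
  fold q v in C. unfold DF.
  set (D0 := Derive (fun t => F (upd5 q 0 t)) (coord5 q 0)) in *.
  set (D1 := Derive (fun t => F (upd5 q 1 t)) (coord5 q 1)) in *.
  set (D2 := Derive (fun t => F (upd5 q 2 t)) (coord5 q 2)) in *.
  set (D3 := Derive (fun t => F (upd5 q 3 t)) (coord5 q 3)) in *.
  set (D4 := Derive (fun t => F (upd5 q 4 t)) (coord5 q 4)) in *.
  pose proof (C 0 1 0 0 0) as C2. pose proof (C 0 0 0 0 1) as C5.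
  assert (E1 : D1 = 0) by lra. assert (E4 : D4 = 0) by lra.
  pose proof (C 1 0 0 0 0) as C1. pose proof (C 0 0 1 0 0) as C3. pose proof (C 0 0 0 1 0) as C4.
  rewrite E1, E4 in C1, C3, C4.
  repeat split; auto; lra.
Qed.

Definition Pf m1 m3 m4 x1 x2 y2 v := (x1 + m1*v/2)^2 + (1 + m3*x2 + m4*y2)*(x2^2 + y2^2 - v)/2.
Definition Gf m1 m3 m4 (F : R5 -> R) q :=
  Pf m1 m3 m4 (r5x1 q) (r5x2 q) (r5y2 q) (F q) / (1 + m3 * r5x2 q + m4 * r5y2 q)^3.

Lemma Gf_d0 m1 m3 m4 (phi : R -> R) x1 x2 y2 :
  1 + m3 * x2 + m4 * y2 <> 0 ->
  ex_derive phi x1 ->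
  (1 + m3*x2 + m4*y2 - 2*m1*x1 - m1^2*(phi x1)) * Derive phi x1 - (4*x1 + 2*m1*(phi x1)) = 0 ->
  is_derive (fun t => Pf m1 m3 m4 t x2 y2 (phi t) / (1 + m3 * x2 + m4 * y2)^3) x1 0.
Proof.
  intros Hn Hd He. unfold Pf. set (D := Derive phi x1) in *.
  auto_derive. auto.
  change (Derive (fun x => phi x) x1) with D.
  match goal with |- ?E = 0 => replace E with ((-1/2) * ((1 + m3*x2 + m4*y2 - 2*m1*x1 - m1^2*(phi x1)) * D - (4*x1 + 2*m1*(phi x1))) / (1 + m3 * x2 + m4 * y2)^3) by (field; auto) end.
  rewrite He. unfold Rdiv. ring.
Qed.

Lemma Gf_d1 m1 m3 m4 (phi : R -> R) x1 x2 y2 y1 :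
  ex_derive phi y1 -> Derive phi y1 = 0 ->
  is_derive (fun t => Pf m1 m3 m4 x1 x2 y2 (phi t) / (1 + m3 * x2 + m4 * y2)^3) y1 0.
Proof.
  intros Hd He. unfold Pf. 
  auto_derive. auto.
  change (Derive (fun x => phi x) y1) with (Derive phi y1). rewrite He. ring.
Qed.

Lemma Gf_d2 m1 m3 m4 (phi : R -> R) x1 x2 y2 D0 D3 :
  1 + m3 * x2 + m4 * y2 <> 0 ->
  ex_derive phi x2 ->
  let D2 := Derive phi x2 in
  let v := phi x2 in
  ((1 + m3*x2 + m4*y2 - 2*m1*x1 - m1^2*v) * D0 - (4*x1 + 2*m1*v)) = 0 ->
  ((3/2*m3*x1 - m1*x2 - m1*m3/4*v) * D0 + (m3*x2 + 1) * D2 + (m3*y2) * D3 - (2*x2 + 2*m3*v)) = 0 ->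
  ((3/2*m4*x1 - m1*y2 - m1*m4/4*v) * D0 + (m4*x2) * D2 + (m4*y2+1) * D3 - (2*y2 + 2*m4*v)) = 0 ->
  is_derive (fun t => Pf m1 m3 m4 x1 t y2 (phi t) / (1 + m3 * t + m4 * y2)^3) x2 0.
Proof.
  intros Hn Hd D2 v e1 e3 e4. unfold Pf.
  assert (T : ((m3 * (x2^2 + y2^2 - v) / 2 + (1 + (m3 * x2 + m4 * y2)) * x2 + (m1 * (x1 + m1 * v / 2) - (1 + (m3 * x2 + m4 * y2)) / 2) * D2) * (1 + (m3 * x2 + m4 * y2)) - 3 * m3 * ((x1 + m1 * v / 2)^2 + (1 + m3*x2 + m4*y2)*(x2^2 + y2^2 - v)/2)) = 0).
  { transitivity ((m1 * (x1 + m1 * v / 2) - (1 + (m3 * x2 + m4 * y2)) / 2) * ((m4*y2+1) * ((3/2*m3*x1 - m1*x2 - m1*m3/4*v) * D0 + (m3*x2 + 1) * D2 + (m3*y2) * D3 - (2*x2 + 2*m3*v)) - (m3*y2) * ((3/2*m4*x1 - m1*y2 - m1*m4/4*v) * D0 + (m4*x2) * D2 + (m4*y2+1) * D3 - (2*y2 + 2*m4*v))) + (((m4*y2+1) * (3/2*m3*x1 - m1*x2 - m1*m3/4*v) - (m3*y2) * (3/2*m4*x1 - m1*y2 - m1*m4/4*v)) / 2) * ((1 + m3*x2 + m4*y2 - 2*m1*x1 - m1^2*v) * D0 - (4*x1 + 2*m1*v))). field. rewrite e1, e3, e4. field. }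
  auto_derive. { repeat split; auto. repeat apply Rmult_integral_contrapositive_currified; auto; lra. }
  change (Derive (fun x => phi x) x2) with D2. fold v.
  match goal with |- ?E = 0 => replace E with (((m3 * (x2^2 + y2^2 - v) / 2 + (1 + (m3 * x2 + m4 * y2)) * x2 + (m1 * (x1 + m1 * v / 2) - (1 + (m3 * x2 + m4 * y2)) / 2) * D2) * (1 + (m3 * x2 + m4 * y2)) - 3 * m3 * ((x1 + m1 * v / 2)^2 + (1 + m3*x2 + m4*y2)*(x2^2 + y2^2 - v)/2)) / (1 + (m3 * x2 + m4 * y2))^4) end.
  rewrite T. unfold Rdiv. ring.
  field. auto.
Qed.

Lemma Gf_d3 m1 m3 m4 (phi : R -> R) x1 x2 y2 D0 D2 :
  1 + m3 * x2 + m4 * y2 <> 0 ->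
  ex_derive phi y2 ->
  let D3 := Derive phi y2 in
  let v := phi y2 in
  ((1 + m3*x2 + m4*y2 - 2*m1*x1 - m1^2*v) * D0 - (4*x1 + 2*m1*v)) = 0 ->
  ((3/2*m3*x1 - m1*x2 - m1*m3/4*v) * D0 + (m3*x2 + 1) * D2 + (m3*y2) * D3 - (2*x2 + 2*m3*v)) = 0 ->
  ((3/2*m4*x1 - m1*y2 - m1*m4/4*v) * D0 + (m4*x2) * D2 + (m4*y2+1) * D3 - (2*y2 + 2*m4*v)) = 0 ->
  is_derive (fun t => Pf m1 m3 m4 x1 x2 t (phi t) / (1 + m3 * x2 + m4 * t)^3) y2 0.
Proof.
  intros Hn Hd D3 v e1 e3 e4. unfold Pf.
  assert (T : ((m4 * (x2^2 + y2^2 - v) / 2 + (1 + (m3 * x2 + m4 * y2)) * y2 + (m1 * (x1 + m1 * v / 2) - (1 + (m3 * x2 + m4 * y2)) / 2) * D3) * (1 + (m3 * x2 + m4 * y2)) - 3 * m4 * ((x1 + m1 * v / 2)^2 + (1 + m3*x2 + m4*y2)*(x2^2 + y2^2 - v)/2)) = 0).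
  { transitivity ((m1 * (x1 + m1 * v / 2) - (1 + (m3 * x2 + m4 * y2)) / 2) * ((m3*x2 + 1) * ((3/2*m4*x1 - m1*y2 - m1*m4/4*v) * D0 + (m4*x2) * D2 + (m4*y2+1) * D3 - (2*y2 + 2*m4*v)) - (m4*x2) * ((3/2*m3*x1 - m1*x2 - m1*m3/4*v) * D0 + (m3*x2 + 1) * D2 + (m3*y2) * D3 - (2*x2 + 2*m3*v))) + (((m3*x2 + 1) * (3/2*m4*x1 - m1*y2 - m1*m4/4*v) - (m4*x2) * (3/2*m3*x1 - m1*x2 - m1*m3/4*v)) / 2) * ((1 + m3*x2 + m4*y2 - 2*m1*x1 - m1^2*v) * D0 - (4*x1 + 2*m1*v))). field. rewrite e1, e3, e4. field. }
  auto_derive. { repeat split; auto. repeat apply Rmult_integral_contrapositive_currified; auto; lra. }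
  change (Derive (fun x => phi x) y2) with D3. fold v.
  match goal with |- ?E = 0 => replace E with (((m4 * (x2^2 + y2^2 - v) / 2 + (1 + (m3 * x2 + m4 * y2)) * y2 + (m1 * (x1 + m1 * v / 2) - (1 + (m3 * x2 + m4 * y2)) / 2) * D3) * (1 + (m3 * x2 + m4 * y2)) - 3 * m4 * ((x1 + m1 * v / 2)^2 + (1 + m3*x2 + m4*y2)*(x2^2 + y2^2 - v)/2)) / (1 + (m3 * x2 + m4 * y2))^4) end.
  rewrite T. unfold Rdiv. ring.
  field. auto.
Qed.

Lemma Gf_deriv m1 m3 m4 (c : coeffs) r F q k :
  power_series_on c r F ->
  (forall t1 t2 t3 t4 t5 : R, forall q : R5, in_polydisc r q ->
     Re (vf_apply (g_elt m1 m3 m4 t1 t2 t3 t4 t5) (defn F) (graph_pt F q)) = 0) ->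
  in_polydisc r q -> 1 + m3 * r5x2 q + m4 * r5y2 q <> 0 ->
  is_derive (fun t => Gf m1 m3 m4 F (upd5 q k t)) (coord5 q k) 0.
Proof.
  intros HF H3 Hq Hn.
  assert (HD : forall k, ex_derive (fun t => F (upd5 q k t)) (coord5 q k)).
  { intros; eapply F_line_ex_derive; eauto. }
  destruct q as [x1 y1 x2 y2 u]. simpl in Hn.
  destruct (conds m1 m3 m4 F x1 y1 x2 y2 u (fun t1 t2 t3 t4 t5 => H3 t1 t2 t3 t4 t5 _ Hq) HD)
    as (E1 & E4 & e1 & e3 & e4).
  destruct k as [|[|[|[|k]]]].
  - apply (is_derive_ext (fun t => Pf m1 m3 m4 t x2 y2 ((fun t => F (mkR5 t y1 x2 y2 u)) t) / (1 + m3 * x2 + m4 * y2)^3)).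
    { intros t; reflexivity. }
    apply Gf_d0; [exact Hn | exact (HD 0%nat) | exact e1].
  - apply (is_derive_ext (fun t => Pf m1 m3 m4 x1 x2 y2 ((fun t => F (mkR5 x1 t x2 y2 u)) t) / (1 + m3 * x2 + m4 * y2)^3)).
    { intros t; reflexivity. }
    apply Gf_d1; [exact (HD 1%nat) | exact E1].
  - apply (is_derive_ext (fun t => Pf m1 m3 m4 x1 t y2 ((fun t => F (mkR5 x1 y1 t y2 u)) t) / (1 + m3 * t + m4 * y2)^3)).
    { intros t; reflexivity. }
    apply (Gf_d2 m1 m3 m4 _ x1 x2 y2 (DF F (mkR5 x1 y1 x2 y2 u) 0) (DF F (mkR5 x1 y1 x2 y2 u) 3)); [exact Hn | exact (HD 2%nat) | exact e1 | exact e3 | exact e4].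
  - apply (is_derive_ext (fun t => Pf m1 m3 m4 x1 x2 t ((fun t => F (mkR5 x1 y1 x2 t u)) t) / (1 + m3 * x2 + m4 * t)^3)).
    { intros t; reflexivity. }
    apply (Gf_d3 m1 m3 m4 _ x1 x2 y2 (DF F (mkR5 x1 y1 x2 y2 u) 0) (DF F (mkR5 x1 y1 x2 y2 u) 2)); [exact Hn | exact (HD 3%nat) | exact e1 | exact e3 | exact e4].
  - apply (is_derive_ext (fun t => Pf m1 m3 m4 x1 x2 y2 ((fun t => F (mkR5 x1 y1 x2 y2 t)) t) / (1 + m3 * x2 + m4 * y2)^3)).
    { intros t; destruct k; reflexivity. }
    apply Gf_d1; [exact (HD 4%nat) | exact E4].
Qed.

Lemma Rabs_def2b x a : Rabs x <= a -> -a <= x <= a.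
Proof. unfold Rabs; destruct (Rcase_abs x); lra. Qed.

Lemma const_line (phi : R -> R) d a b :
  (forall t, Rabs t < d -> is_derive phi t 0) -> Rabs a < d -> Rabs b < d -> phi a = phi b.
Proof.
  intros Hd Ha Hb.
  assert (Hin : forall x, Rmin a b <= x <= Rmax a b -> Rabs x < d).
  { intros x Hx. apply Rabs_def2 in Ha. apply Rabs_def2 in Hb.
    unfold Rmin, Rmax in Hx. destruct (Rle_dec a b); apply Rabs_def1; lra. }
  destruct (MVT_gen phi a b (fun _ => 0)) as [x [_ Hx]].
  - intros x Hx. apply Hd, Hin. lra.
  - intros x Hx. apply continuity_pt_filterlim.
    apply (@ex_derive_continuous R_AbsRing R_NormedModule). exists 0. apply Hd, Hin. lra.
  - lra.
Qed.

Definition inbox (d : R) (q : R5) : Prop :=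
  Rabs (r5x1 q) < d /\ Rabs (r5y1 q) < d /\ Rabs (r5x2 q) < d /\ Rabs (r5y2 q) < d /\ Rabs (r5u q) < d.

Lemma upd5_upd5 q k t s : upd5 (upd5 q k t) k s = upd5 q k s.
Proof. destruct k as [|[|[|[|k]]]]; reflexivity. Qed.
Lemma coord5_upd5 q k t : coord5 (upd5 q k t) k = t.
Proof. destruct k as [|[|[|[|k]]]]; reflexivity. Qed.
Lemma inbox_upd5 d q k t : inbox d q -> Rabs t < d -> inbox d (upd5 q k t).
Proof. intros (?&?&?&?&?) Ht. destruct k as [|[|[|[|k]]]]; unfold inbox; simpl; auto 6. Qed.

Lemma L_small m3 m4 x2 y2 d : 0 < d -> d * (Rabs m3 + Rabs m4) <= 1/2 -> Rabs x2 < d -> Rabs y2 < d ->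
  Rabs (m3 * x2 + m4 * y2) <= 1/2.
Proof.
  intros Hd Hm H2 H4. eapply Rle_trans. apply Rabs_triang. rewrite !Rabs_mult.
  assert (Rabs m3 * Rabs x2 <= Rabs m3 * d) by (apply Rmult_le_compat_l; [apply Rabs_pos|lra]).
  assert (Rabs m4 * Rabs y2 <= Rabs m4 * d) by (apply Rmult_le_compat_l; [apply Rabs_pos|lra]).
  lra.
Qed.

Lemma P_zero m1 m3 m4 F r d (c : coeffs) :
  power_series_on c r F -> normalized c -> 0 < r ->
  (forall t1 t2 t3 t4 t5 : R, forall q : R5, in_polydisc r q ->
     Re (vf_apply (g_elt m1 m3 m4 t1 t2 t3 t4 t5) (defn F) (graph_pt F q)) = 0) ->
  0 < d -> d <= r -> d * (Rabs m3 + Rabs m4) <= 1/2 ->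
  forall q, inbox d q -> Pf m1 m3 m4 (r5x1 q) (r5x2 q) (r5y2 q) (F q) = 0.
Proof.
  intros HF Hn Hr H3 Hd Hdr Hm.
  assert (Hder : forall q k, inbox d q -> is_derive (fun t => Gf m1 m3 m4 F (upd5 q k t)) (coord5 q k) 0).
  { intros q k Hq. apply (Gf_deriv m1 m3 m4 c r F q k HF H3).
    destruct Hq as (?&?&?&?&?); unfold in_polydisc; repeat split; lra.
    destruct Hq as (Q1&Q2&Q3&Q4&Q5). pose proof (L_small m3 m4 (r5x2 q) (r5y2 q) d Hd Hm Q3 Q4) as QL.
    apply Rabs_def2b in QL. lra. }
  assert (Hline : forall q k a b, inbox d q -> Rabs a < d -> Rabs b < d ->
            Gf m1 m3 m4 F (upd5 q k a) = Gf m1 m3 m4 F (upd5 q k b)).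
  { intros q k a b Hq Ha Hb. apply (const_line (fun t => Gf m1 m3 m4 F (upd5 q k t)) d); auto.
    intros t Ht. pose proof (Hder (upd5 q k t) k (inbox_upd5 d q k t Hq Ht)) as H.
    rewrite coord5_upd5 in H. eapply is_derive_ext. 2: exact H. intros s; simpl. rewrite upd5_upd5. reflexivity. }
  intros q Hq. destruct q as [x1 y1 x2 y2 u].
  destruct Hq as (B1 & B2 & B3 & B4 & B5); simpl in *.
  assert (Z0 : Rabs 0 < d) by (rewrite Rabs_R0; lra).
  assert (G : Gf m1 m3 m4 F (mkR5 x1 y1 x2 y2 u) = Gf m1 m3 m4 F (mkR5 0 0 0 0 0)).
  { transitivity (Gf m1 m3 m4 F (mkR5 x1 y1 x2 y2 0)).
    { apply (Hline (mkR5 x1 y1 x2 y2 0) 4%nat u 0); auto. unfold inbox; simpl; auto. }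
    transitivity (Gf m1 m3 m4 F (mkR5 x1 0 x2 y2 0)).
    { apply (Hline (mkR5 x1 0 x2 y2 0) 1%nat y1 0); auto. unfold inbox; simpl; auto. }
    transitivity (Gf m1 m3 m4 F (mkR5 0 0 x2 y2 0)).
    { apply (Hline (mkR5 0 0 x2 y2 0) 0%nat x1 0); auto. unfold inbox; simpl; auto. }
    transitivity (Gf m1 m3 m4 F (mkR5 0 0 0 y2 0)).
    { apply (Hline (mkR5 0 0 0 y2 0) 2%nat x2 0); auto. unfold inbox; simpl; auto. }
    { apply (Hline (mkR5 0 0 0 0 0) 3%nat y2 0); auto. unfold inbox; simpl; auto. } }
  assert (F0 : F (mkR5 0 0 0 0 0) = 0).
  { assert (Z : Rabs 0 <= 0) by (rewrite Rabs_R0; lra).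
    pose proof (F_small c r F (r/2) 0 (mkR5 0 0 0 0 0) HF Hn ltac:(lra) ltac:(lra) Z Z Z Z Z) as H.
    assert (E : (0 / (r/2))^2 * Series (Aser c (r / 2)) = 0) by (field; lra).
    rewrite E in H. pose proof (Rabs_pos (F (mkR5 0 0 0 0 0))). apply Rabs_eq_0. lra. }
  assert (Gz : Gf m1 m3 m4 F (mkR5 0 0 0 0 0) = 0).
  { unfold Gf, Pf. cbn [r5x1 r5x2 r5y2]. rewrite F0. field. }
  rewrite Gz in G. unfold Gf in G. cbn [r5x1 r5x2 r5y2] in G. cbn [r5x1 r5x2 r5y2].
  assert (Hn0 : 1 + m3 * x2 + m4 * y2 <> 0).
  { pose proof (L_small m3 m4 x2 y2 d Hd Hm B3 B4) as QL. apply Rabs_def2b in QL. lra. }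
  replace (Pf m1 m3 m4 x1 x2 y2 (F (mkR5 x1 y1 x2 y2 u))) with
    (Pf m1 m3 m4 x1 x2 y2 (F (mkR5 x1 y1 x2 y2 u)) / (1 + m3 * x2 + m4 * y2) ^ 3 * (1 + m3 * x2 + m4 * y2) ^ 3)
    by (field; auto).
  rewrite G. ring.
Qed.

Definition aff (L : nat -> nat -> C) (b : nat -> C) (zeta : C3) : C3 :=
  mkC3 (L 0%nat 0%nat * z1c zeta + L 0%nat 1%nat * z2c zeta + L 0%nat 2%nat * wc zeta + b 0%nat)%C
       (L 1%nat 0%nat * z1c zeta + L 1%nat 1%nat * z2c zeta + L 1%nat 2%nat * wc zeta + b 1%nat)%C
       (L 2%nat 0%nat * z1c zeta + L 2%nat 1%nat * z2c zeta + L 2%nat 2%nat * wc zeta + b 2%nat)%C.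

Definition box (d : R) (zeta : C3) : Prop :=
  Rabs (Re (z1c zeta)) < d /\ Rabs (Im (z1c zeta)) < d /\
  Rabs (Re (z2c zeta)) < d /\ Rabs (Im (z2c zeta)) < d /\
  Rabs (Re (wc zeta)) < d /\ Rabs (Im (wc zeta)) < d.

Lemma im_le_Cmod c : Rabs (Im c) <= Cmod c.
Proof.
  destruct c as [a b]. unfold Cmod, Im; simpl. rewrite <- sqrt_Rsqr_abs. apply sqrt_le_1.
  apply Rle_0_sqr. nra. unfold Rsqr; nra.
Qed.

Lemma Cmod_sub_le_dist1 a b : Cmod (z1c a - z1c b)%C <= dist3 a b.
Proof. unfold dist3. apply Rmax_l. Qed.
Lemma Cmod_sub_le_dist2 a b : Cmod (z2c a - z2c b)%C <= dist3 a b.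
Proof. unfold dist3. eapply Rle_trans; [|apply Rmax_r]. apply Rmax_l. Qed.
Lemma Cmod_sub_le_dist3 a b : Cmod (wc a - wc b)%C <= dist3 a b.
Proof. unfold dist3. eapply Rle_trans; [|apply Rmax_r]. apply Rmax_r. Qed.

Lemma lin_bound (l0 l1 l2 : C) a b :
  Cmod ((l0 * z1c a + l1 * z2c a + l2 * wc a) - (l0 * z1c b + l1 * z2c b + l2 * wc b))%C
  <= (Cmod l0 + Cmod l1 + Cmod l2) * dist3 a b.
Proof.
  replace ((l0 * z1c a + l1 * z2c a + l2 * wc a) - (l0 * z1c b + l1 * z2c b + l2 * wc b))%C
    with (l0 * (z1c a - z1c b) + l1 * (z2c a - z2c b) + l2 * (wc a - wc b))%C by ring.
  eapply Rle_trans. apply Cmod_triangle. eapply Rle_trans. apply Rplus_le_compat_r. apply Cmod_triangle.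
  rewrite !Cmod_mult.
  pose proof (Cmod_sub_le_dist1 a b). pose proof (Cmod_sub_le_dist2 a b). pose proof (Cmod_sub_le_dist3 a b).
  pose proof (Cmod_ge_0 l0). pose proof (Cmod_ge_0 l1). pose proof (Cmod_ge_0 l2).
  assert (Cmod l0 * Cmod (z1c a - z1c b) <= Cmod l0 * dist3 a b) by (apply Rmult_le_compat_l; auto).
  assert (Cmod l1 * Cmod (z2c a - z2c b) <= Cmod l1 * dist3 a b) by (apply Rmult_le_compat_l; auto).
  assert (Cmod l2 * Cmod (wc a - wc b) <= Cmod l2 * dist3 a b) by (apply Rmult_le_compat_l; auto).
  lra.
Qed.

Lemma coord_bounds (c c' : C) K e : Cmod (c - c')%C <= K * e ->
  Rabs (Re c) <= Rabs (Re c') + K * e /\ Rabs (Im c) <= Rabs (Im c') + K * e.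
Proof.
  intros H. pose proof (re_le_Cmod (c - c')%C). pose proof (im_le_Cmod (c - c')%C).
  destruct c as [a b], c' as [a' b']. unfold Re, Im in *. simpl in *.
  split.
  - pose proof (Rabs_triang (a - a') a'). replace (a - a' + a') with a in H2 by ring.
    replace (a + - a') with (a - a') in H0 by ring. lra.
  - pose proof (Rabs_triang (b - b') b'). replace (b - b' + b') with b in H2 by ring.
    replace (b + - b') with (b - b') in H1 by ring. lra.
Qed.

Lemma open_box_aff L b d : open3 (fun eta => box d (aff L b eta)).
Proof.
  intros a Ha.
  set (K := (Cmod (L 0%nat 0%nat) + Cmod (L 0%nat 1%nat) + Cmod (L 0%nat 2%nat))
          + (Cmod (L 1%nat 0%nat) + Cmod (L 1%nat 1%nat) + Cmod (L 1%nat 2%nat))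
          + (Cmod (L 2%nat 0%nat) + Cmod (L 2%nat 1%nat) + Cmod (L 2%nat 2%nat))).
  assert (HK : 0 <= K) by (unfold K; repeat apply Rplus_le_le_0_compat; apply Cmod_ge_0).
  destruct Ha as (A1 & A2 & A3 & A4 & A5 & A6).
  set (e0 := Rmin (Rmin (d - Rabs (Re (z1c (aff L b a)))) (d - Rabs (Im (z1c (aff L b a)))))
            (Rmin (Rmin (d - Rabs (Re (z2c (aff L b a)))) (d - Rabs (Im (z2c (aff L b a)))))
                  (Rmin (d - Rabs (Re (wc (aff L b a)))) (d - Rabs (Im (wc (aff L b a))))))).
  assert (He0 : 0 < e0) by (unfold e0; repeat apply Rmin_pos; lra).
  assert (E1 : e0 <= d - Rabs (Re (z1c (aff L b a)))) by (unfold e0; eapply Rle_trans; apply Rmin_l).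
  assert (E2 : e0 <= d - Rabs (Im (z1c (aff L b a)))) by (unfold e0; eapply Rle_trans; [apply Rmin_l|apply Rmin_r]).
  assert (E3 : e0 <= d - Rabs (Re (z2c (aff L b a)))) by (unfold e0; eapply Rle_trans; [apply Rmin_r|]; eapply Rle_trans; apply Rmin_l).
  assert (E4 : e0 <= d - Rabs (Im (z2c (aff L b a)))) by (unfold e0; eapply Rle_trans; [apply Rmin_r|]; eapply Rle_trans; [apply Rmin_l|apply Rmin_r]).
  assert (E5 : e0 <= d - Rabs (Re (wc (aff L b a)))) by (unfold e0; eapply Rle_trans; [apply Rmin_r|]; eapply Rle_trans; [apply Rmin_r|apply Rmin_l]).
  assert (E6 : e0 <= d - Rabs (Im (wc (aff L b a)))) by (unfold e0; eapply Rle_trans; [apply Rmin_r|]; eapply Rle_trans; [apply Rmin_r|apply Rmin_r]).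
  exists (e0 / (K + 1)). split. apply Rdiv_lt_0_compat; lra.
  intros b' Hb'.
  assert (Hd0 : 0 <= dist3 a b').
  { unfold dist3. eapply Rle_trans; [apply Cmod_ge_0|apply Rmax_l]. }
  assert (HKe : K * dist3 b' a < e0).
  { assert (dist3 b' a = dist3 a b') as ->.
    { unfold dist3. rewrite <- (Cmod_opp (z1c b' - z1c a)), <- (Cmod_opp (z2c b' - z2c a)), <- (Cmod_opp (wc b' - wc a)).
      repeat f_equal; ring. }
    apply Rle_lt_trans with (K * (e0 / (K + 1))).
    apply Rmult_le_compat_l; lra.
    replace (K * (e0 / (K + 1))) with (e0 * (K / (K + 1))) by (field; lra).
    rewrite <- (Rmult_1_r e0) at 2. apply Rmult_lt_compat_l; auto.
    apply (Rmult_lt_reg_r (K + 1)). lra. unfold Rdiv. rewrite Rmult_assoc, Rinv_l by lra. lra. }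
  assert (Hd1 : 0 <= dist3 b' a) by (unfold dist3; eapply Rle_trans; [apply Cmod_ge_0|apply Rmax_l]).
  assert (G : forall l0 l1 l2 bb, Cmod l0 + Cmod l1 + Cmod l2 <= K ->
     Cmod ((l0 * z1c b' + l1 * z2c b' + l2 * wc b' + bb) - (l0 * z1c a + l1 * z2c a + l2 * wc a + bb))%C <= K * dist3 b' a).
  { intros l0 l1 l2 bb Hl.
    replace ((l0 * z1c b' + l1 * z2c b' + l2 * wc b' + bb) - (l0 * z1c a + l1 * z2c a + l2 * wc a + bb))%C
      with ((l0 * z1c b' + l1 * z2c b' + l2 * wc b') - (l0 * z1c a + l1 * z2c a + l2 * wc a))%C by ring.
    eapply Rle_trans. apply lin_bound. apply Rmult_le_compat_r; auto. }
  pose proof (Cmod_ge_0 (L 0%nat 0%nat)). pose proof (Cmod_ge_0 (L 0%nat 1%nat)). pose proof (Cmod_ge_0 (L 0%nat 2%nat)).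
  pose proof (Cmod_ge_0 (L 1%nat 0%nat)). pose proof (Cmod_ge_0 (L 1%nat 1%nat)). pose proof (Cmod_ge_0 (L 1%nat 2%nat)).
  pose proof (Cmod_ge_0 (L 2%nat 0%nat)). pose proof (Cmod_ge_0 (L 2%nat 1%nat)). pose proof (Cmod_ge_0 (L 2%nat 2%nat)).
  destruct (coord_bounds (z1c (aff L b b')) (z1c (aff L b a)) K (dist3 b' a)) as [C1 C2].
  { apply G. unfold K; lra. }
  destruct (coord_bounds (z2c (aff L b b')) (z2c (aff L b a)) K (dist3 b' a)) as [C3 C4].
  { apply G. unfold K; lra. }
  destruct (coord_bounds (wc (aff L b b')) (wc (aff L b a)) K (dist3 b' a)) as [C5 C6].
  { apply G. unfold K; lra. }
  unfold box. repeat split; lra.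
Qed.

Definition z0 : nat -> C := fun _ => RtoC 0.
Definition Idm : nat -> nat -> C := fun i j => if Nat.eqb i j then RtoC 1 else RtoC 0.

Lemma aff_id zeta : aff Idm z0 zeta = zeta.
Proof.
  destruct zeta as [[a b] [c d] [e f]]. unfold aff, Idm, z0; simpl.
  unfold Cmult, Cplus, RtoC; simpl. f_equal; f_equal; ring.
Qed.

Lemma open_box d : open3 (box d).
Proof.
  intros a Ha. destruct (open_box_aff Idm z0 d a) as [e [He H]].
  rewrite aff_id; auto. exists e; split; auto. intros b Hb. rewrite <- aff_id. auto.
Qed.

Lemma germ_generic m1 m3 m4 (F : R5 -> R) r d (L Li : nat -> nat -> C) (S : C3 -> Prop) :
  0 < d -> d <= r ->
  (forall q, inbox d q -> Pf m1 m3 m4 (r5x1 q) (r5x2 q) (r5y2 q) (F q) = 0) ->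
  (forall q v, inbox d q -> Rabs v < d -> Pf m1 m3 m4 (r5x1 q) (r5x2 q) (r5y2 q) v = 0 -> v = F q) ->
  (forall x1 y1 x2 y2 u v, box d (mkC3 (x1, y1) (x2, y2) (u, v)) ->
     (S (aff L z0 (mkC3 (x1, y1) (x2, y2) (u, v))) <-> Pf m1 m3 m4 x1 x2 y2 v = 0)) ->
  (forall zeta, aff Li z0 (aff L z0 zeta) = zeta) -> (forall zeta, aff L z0 (aff Li z0 zeta) = zeta) ->
  affinely_equiv_germ (hyp F r) S.
Proof.
  intros Hd Hdr HP Hu HS Hinv1 Hinv2.
  exists (aff L z0), (box d), (fun eta => box d (aff Li z0 eta)).
  split; [|split; [|split; [|split]]].
  - split. exists L, z0. intros; reflexivity. exists (aff Li z0). split; auto.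
  - apply open_box.
  - unfold box, C3_zero; simpl. rewrite Rabs_R0. repeat split; lra.
  - apply open_box_aff.
  - intros eta. split.
    + intros [zeta [[q [Hq Hz]] [Hw He]]]. subst eta zeta.
      destruct q as [x1 y1 x2 y2 u]. unfold C3_of_R6, graph_pt in *. simpl in *.
      split.
      * apply HS. exact Hw. destruct Hw as (W1 & W2 & W3 & W4 & W5 & W6). simpl in *.
        apply (HP (mkR5 x1 y1 x2 y2 u)). unfold inbox; simpl; auto.
      * rewrite Hinv1. exact Hw.
    + intros [HSe Hb].
      remember (aff Li z0 eta) as zeta eqn:Hz.
      assert (Heta : eta = aff L z0 zeta) by (rewrite Hz, Hinv2; reflexivity).
      destruct zeta as [[x1 y1] [x2 y2] [u v]].
      assert (HPv : Pf m1 m3 m4 x1 x2 y2 v = 0) by (apply (HS x1 y1 x2 y2 u v Hb); rewrite <- Heta; exact HSe).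
      destruct Hb as (W1 & W2 & W3 & W4 & W5 & W6). simpl in *.
      assert (Hv : v = F (mkR5 x1 y1 x2 y2 u)).
      { apply (Hu (mkR5 x1 y1 x2 y2 u) v); auto. unfold inbox; simpl; auto. }
      exists (mkC3 (x1, y1) (x2, y2) (u, v)). split; [|split; [|exact Heta]].
      * exists (mkR5 x1 y1 x2 y2 u). split. unfold in_polydisc; simpl; repeat split; lra.
        unfold C3_of_R6, graph_pt; simpl. rewrite <- Hv. reflexivity.
      * unfold box; simpl; repeat split; auto.
Qed.

Lemma root_unique m1 m3 m4 x1 x2 y2 v w :
  Rabs (m3 * x2 + m4 * y2) <= 1/2 ->
  Rabs m1 * Rabs x1 + m1^2 * (Rabs v + Rabs w) / 4 < 1/4 ->
  Pf m1 m3 m4 x1 x2 y2 v = 0 -> Pf m1 m3 m4 x1 x2 y2 w = 0 -> v = w.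
Proof.
  intros HL Hb Hv Hw.
  assert (E : Pf m1 m3 m4 x1 x2 y2 v - Pf m1 m3 m4 x1 x2 y2 w =
              (v - w) * (m1 * x1 + m1^2 * (v + w) / 4 - (1 + (m3 * x2 + m4 * y2)) / 2)).
  { unfold Pf. field. }
  rewrite Hv, Hw in E.
  assert (Hf : m1 * x1 + m1^2 * (v + w) / 4 - (1 + (m3 * x2 + m4 * y2)) / 2 < 0).
  { apply Rabs_def2b in HL.
    assert (m1 * x1 <= Rabs m1 * Rabs x1) by (rewrite <- Rabs_mult; apply Rle_abs).
    assert (v + w <= Rabs v + Rabs w) by (pose proof (Rle_abs v); pose proof (Rle_abs w); lra).
    assert (m1^2 * (v + w) <= m1^2 * (Rabs v + Rabs w)) by (apply Rmult_le_compat_l; [apply pow2_ge_0|auto]).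
    lra. }
  assert (v - w = 0).
  { apply (Rmult_eq_reg_r (m1 * x1 + m1^2 * (v + w) / 4 - (1 + (m3 * x2 + m4 * y2)) / 2)); lra. }
  lra.
Qed.

Definition L1 (m1 : R) : nat -> nat -> C := fun i j =>
  match i, j with
  | 0%nat, 0%nat => RtoC 1 | 0%nat, 2%nat => (0, - (m1 / 2))
  | 1%nat, 1%nat => RtoC 1 | 2%nat, 2%nat => RtoC 1 | _, _ => RtoC 0 end.
Definition L1i (m1 : R) : nat -> nat -> C := fun i j =>
  match i, j with
  | 0%nat, 0%nat => RtoC 1 | 0%nat, 2%nat => (0, m1 / 2)
  | 1%nat, 1%nat => RtoC 1 | 2%nat, 2%nat => RtoC 1 | _, _ => RtoC 0 end.

Lemma L1_inv1 m1 zeta : aff (L1i m1) z0 (aff (L1 m1) z0 zeta) = zeta.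
Proof.
  destruct zeta as [[a b] [c d] [e f]]. unfold aff, L1, L1i, z0; simpl.
  unfold Cmult, Cplus, RtoC; simpl. f_equal; f_equal; field.
Qed.
Lemma L1_inv2 m1 zeta : aff (L1 m1) z0 (aff (L1i m1) z0 zeta) = zeta.
Proof.
  destruct zeta as [[a b] [c d] [e f]]. unfold aff, L1, L1i, z0; simpl.
  unfold Cmult, Cplus, RtoC; simpl. f_equal; f_equal; field.
Qed.

Lemma HS1 m1 x1 y1 x2 y2 u v :
  model1 (aff (L1 m1) z0 (mkC3 (x1, y1) (x2, y2) (u, v))) <-> Pf m1 0 0 x1 x2 y2 v = 0.
Proof.
  unfold model1. rewrite Cmod2_alt. unfold aff, L1, z0; simpl.
  unfold Cmult, Cplus, RtoC, Re, Im; simpl. unfold Pf.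
  split; intros Hx; nra.
Qed.

Section M2.
Variables (m1 m3 m4 : R).
Let s2 := m3 ^ 2 + m4 ^ 2.
Let r0 := sqrt s2.

Definition L2 : nat -> nat -> C := fun i j =>
  match i, j with
  | 0%nat, 0%nat => RtoC (2 * r0) | 0%nat, 2%nat => (0, - (r0 * m1))
  | 1%nat, 1%nat => (- m3, m4) | 2%nat, 2%nat => RtoC (2 * s2) | _, _ => RtoC 0 end.
Definition L2i : nat -> nat -> C := fun i j =>
  match i, j with
  | 0%nat, 0%nat => RtoC (1 / (2 * r0)) | 0%nat, 2%nat => (0, m1 / (4 * s2))
  | 1%nat, 1%nat => (- m3 / s2, - m4 / s2) | 2%nat, 2%nat => RtoC (1 / (2 * s2)) | _, _ => RtoC 0 end.

Hypothesis Hs2 : s2 <> 0.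

Lemma r0_pos : 0 < r0.
Proof. unfold r0. apply sqrt_lt_R0. unfold s2 in *. pose proof (pow2_ge_0 m3). pose proof (pow2_ge_0 m4).
  destruct (Rle_lt_or_eq_dec 0 (m3^2 + m4^2)); lra. Qed.

Lemma L2_inv1 zeta : aff L2i z0 (aff L2 z0 zeta) = zeta.
Proof.
  pose proof r0_pos.
  destruct zeta as [[a b] [c d] [e f]]. unfold aff, L2, L2i, z0; simpl.
  unfold Cmult, Cplus, RtoC; simpl. unfold s2 in *. f_equal; f_equal; field; lra.
Qed.
Lemma L2_inv2 zeta : aff L2 z0 (aff L2i z0 zeta) = zeta.
Proof.
  pose proof r0_pos.
  destruct zeta as [[a b] [c d] [e f]]. unfold aff, L2, L2i, z0; simpl.
  unfold Cmult, Cplus, RtoC; simpl. unfold s2 in *. f_equal; f_equal; field; lra.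
Qed.

Lemma HS2 x1 y1 x2 y2 u v : 0 < 1 + m3 * x2 + m4 * y2 ->
  model2 (aff L2 z0 (mkC3 (x1, y1) (x2, y2) (u, v))) <-> Pf m1 m3 m4 x1 x2 y2 v = 0.
Proof.
  intros HL. pose proof r0_pos as Hr.
  assert (Hr2 : r0 * r0 = s2) by (unfold r0; apply sqrt_sqrt; unfold s2; nra).
  unfold model2. rewrite Cmod2_alt. unfold aff, L2, z0; simpl.
  unfold Cmult, Cplus, RtoC, Re, Im; simpl.
  match goal with |- _ /\ ?l = ?A / ?B + ?C <-> _ =>
    assert (Id : l * B - A - C * B = -4 * s2 * Pf m1 m3 m4 x1 x2 y2 v);
    [ replace A with (r0 * r0 * (2*x1 + m1*v)^2) by ring; rewrite Hr2; unfold Pf, s2; field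
    | assert (HB : B = 1 + m3 * x2 + m4 * y2) by ring;
      split;
      [ intros [_ Hx]; rewrite Hx in Id; rewrite HB in Id;
        assert (Z : -4 * s2 * Pf m1 m3 m4 x1 x2 y2 v = 0) by (rewrite <- Id; field; lra);
        apply Rmult_integral in Z; destruct Z as [Z|Z]; [exfalso; lra | exact Z]
      | intros Hx; rewrite Hx in Id; split;
        [ lra
        | apply (Rmult_eq_reg_r B); [ transitivity (A + C * B); [lra | field; intro Hz; lra] | rewrite HB; lra ] ] ] ]
  end.
Qed.
End M2.

Theorem theorem4p6 (m1 m3 m4 : R) (F : R5 -> R) (r : R) :
  integral_variety m1 m3 m4 F r ->
  affinely_equiv_germ (hyp F r) model1 \/ affinely_equiv_germ (hyp F r) model2.
Proof.
  intros [Hr [[c [HF Hn]] H3]].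
  set (rho := r / 2).
  set (K := Series (Aser c rho)).
  set (M := Rabs m1 + m1^2 + m1^2 * Rabs K / rho + Rabs m3 + Rabs m4 + 1).
  assert (Hrho : 0 < rho) by (unfold rho; lra).
  assert (HM : 1 <= M).
  { unfold M. pose proof (Rabs_pos m1). pose proof (Rabs_pos m3). pose proof (Rabs_pos m4).
    pose proof (pow2_ge_0 m1). assert (0 <= m1^2 * Rabs K / rho).
    { apply Rdiv_le_0_compat; auto. apply Rmult_le_pos; auto. apply Rabs_pos. } lra. }
  set (d := Rmin rho (/ (4 * M))).
  assert (Hd : 0 < d) by (unfold d; apply Rmin_pos; auto; apply Rinv_0_lt_compat; lra).
  assert (Hdr : d <= rho) by (unfold d; apply Rmin_l).
  assert (HdM : d * M <= 1/4).
  { unfold d. apply Rle_trans with (/ (4 * M) * M).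
    apply Rmult_le_compat_r; [lra | apply Rmin_r]. right. field. lra. }
  assert (Hm34 : d * (Rabs m3 + Rabs m4) <= 1/2).
  { assert (Rabs m3 + Rabs m4 <= M).
    { unfold M. pose proof (Rabs_pos m1). pose proof (pow2_ge_0 m1). assert (0 <= m1^2 * Rabs K / rho).
      { apply Rdiv_le_0_compat; auto. apply Rmult_le_pos; auto. apply Rabs_pos. } lra. }
    assert (d * (Rabs m3 + Rabs m4) <= d * M) by (apply Rmult_le_compat_l; lra). lra. }
  assert (HP := P_zero m1 m3 m4 F r d c HF Hn Hr H3 Hd ltac:(unfold rho in Hdr; lra) Hm34).
  assert (Hu : forall q v, inbox d q -> Rabs v < d ->
             Pf m1 m3 m4 (r5x1 q) (r5x2 q) (r5y2 q) v = 0 -> v = F q).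
  { intros q v Hq Hv HPv. destruct Hq as (B1 & B2 & B3 & B4 & B5) eqn:Hq'.
    apply (root_unique m1 m3 m4 (r5x1 q) (r5x2 q) (r5y2 q)); auto.
    - apply (L_small m3 m4 _ _ d); auto.
    - assert (HF0 := F_small c r F rho d q HF Hn ltac:(unfold rho; lra) ltac:(lra)
                 ltac:(lra) ltac:(lra) ltac:(lra) ltac:(lra) ltac:(lra)).
      fold K in HF0.
      assert (Hq1 : 0 <= d / rho <= 1).
      { split. apply Rdiv_le_0_compat; lra. apply (Rmult_le_reg_r rho); auto. unfold Rdiv. rewrite Rmult_assoc, Rinv_l; lra. }
      assert (HFb : Rabs (F q) <= d / rho * Rabs K).
      { assert (K <= Rabs K) by apply Rle_abs.
        assert ((d/rho)^2 * K <= (d/rho)^2 * Rabs K) by (apply Rmult_le_compat_l; [apply pow2_ge_0|auto]).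
        assert (0 <= Rabs K) by apply Rabs_pos.
        assert ((d/rho)^2 * Rabs K <= d/rho * Rabs K).
        { apply Rmult_le_compat_r; auto. simpl. nra. }
        lra. }
      assert (A1 : Rabs m1 * Rabs (r5x1 q) <= Rabs m1 * d) by (apply Rmult_le_compat_l; [apply Rabs_pos|lra]).
      assert (A2 : m1^2 * (Rabs v + Rabs (F q)) <= m1^2 * (d + d / rho * Rabs K)) by
        (apply Rmult_le_compat_l; [apply pow2_ge_0|lra]).
      assert (A3 : d * M = d * (Rabs m1 + m1^2 + Rabs m3 + Rabs m4 + 1) + m1^2 * (d / rho * Rabs K)) by (unfold M; field; lra).
      pose proof (pow2_ge_0 m1). pose proof (Rabs_pos m3). pose proof (Rabs_pos m4). pose proof (Rabs_pos m1).
      assert (0 <= m1^2 * (d / rho * Rabs K)) by (apply Rmult_le_pos; auto; apply Rmult_le_pos; [lra|apply Rabs_pos]).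
      assert (d * (Rabs m1 + m1^2 + Rabs m3 + Rabs m4 + 1) >= d * (Rabs m1 + m1^2/4) + d) by nra.
      nra. }
  destruct (Req_dec (m3^2 + m4^2) 0) as [Hz|Hz].
  - left. assert (m3 = 0) by nra. assert (m4 = 0) by nra. subst m3 m4.
    apply (germ_generic m1 0 0 F r d (L1 m1) (L1i m1) model1 Hd ltac:(unfold rho in Hdr; lra) HP Hu).
    + intros. apply HS1.
    + apply L1_inv1.
    + apply L1_inv2.
  - right.
    apply (germ_generic m1 m3 m4 F r d (L2 m1 m3 m4) (L2i m1 m3 m4) model2 Hd ltac:(unfold rho in Hdr; lra) HP Hu).
    + intros x1 y1 x2 y2 u v Hb. apply HS2; auto.
      destruct Hb as (W1 & W2 & W3 & W4 & W5 & W6). simpl in *.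
      pose proof (L_small m3 m4 x2 y2 d Hd Hm34 W3 W4) as QL. apply Rabs_def2b in QL. lra.
    + apply L2_inv1; auto.
    + apply L2_inv2; auto.
Qed.
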